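(* Consider a nonabelian Chaplygin nonholonomic system as described in the context with two degrees of freedom ($m=2$) and with $G_{\alpha\beta}$ invertible. The necessary and sufficient condition for it to be Chaplygin Hamiltonizable is that $$\frac{\partial K^1_{12}}{\partial r^1}=-\frac{\partial K^2_{12}}{\partial r^2},$$ or equivalently that the reduced system possess a nonzero invariant measure density $N(r)\in C^1$. The multiplier is then given by $f(r)=e^{\int K^1_{12}\,dr^2}=N$.
   Context: $Q$ is an $n$-dimensional manifold with mechanical Lagrangian $L$ and linear nonholonomic constraint distribution $\mathcal D$; a matrix Lie group $G$ of dimension $k$ acts freely and properly, leaving $L$ and $\mathcal D$ invariant, with $\mathcal D_q\oplus T_q\mathrm{Orb}(q)=T_qQ$, $Q\ne G$. Shape space $M=Q/G$ with coordinates $r^\alpha$, $\alpha=1,\dots,m$, here $m=2$. With $\{b_a\}$ a basis of $\mathfrak g$, structure constants $C^a_{bc}$, $\xi=g^{-1}\dot g$: reduced Lagrangian $l=\tfrac12g_{\alpha\beta}\dot r^\alpha\dot r^\beta+g_{a\alpha}\dot r^\alpha\xi^a+\tfrac12g_{ab}\xi^a\xi^b-V(r)$; constraints $\xi^a=-\mathcal A^a_\alpha(r)\dot r^\alpha$; $l_c(r,\dot r)=l(r,\dot r,-\mathcal A\dot r)$; $G_{\alpha\beta}=\partial^2l_c/\partial\dot r^\alpha\partial\dot r^\beta$ with inverse $G^{\alpha\beta}$; $\tilde p_\alpha=\partial l_c/\partial\dot r^\alpha$; $h=\tilde p_\alpha\dot r^\alpha-l_c$; $\mathcal B^a_{\alpha\beta}=\partial\mathcal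 A^a_\alpha/\partial r^\beta-\partial\mathcal A^a_\beta/\partial r^\alpha+C^a_{bc}\mathcal A^b_\alpha\mathcal A^c_\beta$; $(\mu_a)_c=\partial l/\partial\xi^a$ with constraints substituted; $M_{a\alpha}=g_{a\alpha}-g_{ab}\mathcal A^b_\alpha$; $K^\gamma_{\beta\alpha}=M_{b\epsilon}G^{\epsilon\gamma}\mathcal B^b_{\beta\alpha}$. The reduced equations are $\dot r^\alpha=\partial h/\partial\tilde p_\alpha$, $\dot{\tilde p}_\alpha=-\partial h/\partial r^\alpha-(\mu_a)_c\mathcal B^a_{\alpha\beta}\partial h/\partial\tilde p_\beta$, with almost-Poisson bracket $\{g,k\}^{Chap}_{AP}=\{g,k\}_{can}+\Lambda_{\alpha\beta}\frac{\partial g}{\partial\tilde p_\alpha}\frac{\partial k}{\partial\tilde p_\beta}$, $\Lambda_{\alpha\beta}=(\mu_a)_c\mathcal B^a_{\beta\alpha}$. Chaplygin Hamiltonizable means: there is a nowhere-zero $f(r)\in C^1$ such that, with $\dot r=f\omega$, $\tilde{\mathcal P}_\alpha=f\tilde p_\alpha$, the bracket $\{g,k\}^{Chap}_{AP}$ expressed in the variables $(r,\tilde{\mathcal P})$ equals $f$ times the canonical bracket in $(r,\tilde{\mathcal P})$ (equivalently, the reduced dynamics is Hamiltonian after the time reparameterization $d\tau=f\,dt$); $f$ is the multiplier. An invariant measure density is a function $N(r)$ such that the measure $N\,dr^1dr^2d\tilde p_1d\tilde p_2$ is preserved by the flow of the reduced equations. *)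

(* Defs.v *)
From Stdlib Require Import Reals List.
From Coquelicot Require Import Coquelicot.
Import ListNotations.
Open Scope R_scope.

Definition sumk (n : nat) (F : nat -> R) : R :=
  fold_right Rplus 0 (map F (seq 0 n)).

Definition cmp2 (alpha : nat) (v : R * R) : R :=
  match alpha with O => fst v | _ => snd v end.

(* partial derivatives of a function on R^2 (coordinates r^1, r^2 are
   indexed 0 and 1) *)
Definition pd1 (F : R * R -> R) (r : R * R) : R :=
  Derive (fun t => F (t, snd r)) (fst r).
Definition pd2 (F : R * R -> R) (r : R * R) : R :=
  Derive (fun t => F (fst r, t)) (snd r).
Definition dd (alpha : nat) (F : R * R -> R) : R * R -> R :=
  match alpha with O => pd1 F | _ => pd2 F end.

Definition exd (alpha : nat) (F : R * R -> R) (r : R * R) : Prop :=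
  match alpha with
  | O => ex_derive (fun t => F (t, snd r)) (fst r)
  | _ => ex_derive (fun t => F (fst r, t)) (snd r)
  end.

Fixpoint Ck (U : R * R -> Prop) (n : nat) (F : R * R -> R) : Prop :=
  match n with
  | O => forall r, U r -> continuous F r
  | S n' => (forall r, U r -> exd 0 F r /\ exd 1 F r)
            /\ Ck U n' F /\ Ck U n' (pd1 F) /\ Ck U n' (pd2 F)
  end.

Definition smooth_on (U : R * R -> Prop) (F : R * R -> R) : Prop :=
  forall n, Ck U n F.

Definition C1_on (U : R * R -> Prop) (F : R * R -> R) : Prop := Ck U 1 F.

(* functions on phase space (r, p~) in (R^2) x (R^2) *)
Definition drP (alpha : nat) (g : R * R -> R * R -> R) (r p : R * R) : R :=
  dd alpha (fun r' => g r' p) r.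
Definition dpP (alpha : nat) (g : R * R -> R * R -> R) (r p : R * R) : R :=
  dd alpha (fun p' => g r p') p.

Definition uncurry2 (g : R * R -> R * R -> R) : (R * R) * (R * R) -> R :=
  fun z => g (fst z) (snd z).

Definition phase_C1 (U : R * R -> Prop) (g : R * R -> R * R -> R) : Prop :=
  forall r p, U r ->
    continuous (uncurry2 g) (r, p) /\
    forall alpha, (alpha < 2)%nat ->
      exd alpha (fun r' => g r' p) r /\ exd alpha (fun p' => g r p') p /\
      continuous (uncurry2 (drP alpha g)) (r, p) /\
      continuous (uncurry2 (dpP alpha g)) (r, p).

Definition convex_set (U : R * R -> Prop) : Prop :=
  forall x y t, U x -> U y -> 0 <= t <= 1 ->
    U (t * fst x + (1 - t) * fst y, t * snd x + (1 - t) * snd y).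

(* Reduced data of the Chaplygin system, in shape coordinates r=(r^1,r^2) *)
(*   k            : dim G;   group indices a,b,c in {0..k-1}             *)
(*   C a b c      : structure constants C^a_{bc}                        *)
(*   gs al be r   : g_{alpha beta}(r)                                   *)
(*   gm a al r    : g_{a alpha}(r)                                      *)
(*   gg a b r     : g_{ab}(r)                                           *)
(*   V r          : potential                                           *)
(*   A a al r     : connection coefficients A^a_alpha(r)                *)

Section Chaplygin.
Variable k : nat.
Variable C : nat -> nat -> nat -> R.
Variables gs gm gg : nat -> nat -> R * R -> R.
Variable V : R * R -> R.
Variable A : nat -> nat -> R * R -> R.

(* reduced Lagrangian l(r, rdot, xi) *)
Definition lred (r v : R * R) (xi : nat -> R) : R :=
  / 2 * sumk 2 (fun al => sumk 2 (fun be => gs al be r * cmp2 al v * cmp2 be v))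
  + sumk k (fun a => sumk 2 (fun al => gm a al r * cmp2 al v * xi a))
  + / 2 * sumk k (fun a => sumk k (fun b => gg a b r * xi a * xi b))
  - V r.

Definition xic (r v : R * R) (a : nat) : R :=
  - sumk 2 (fun al => A a al r * cmp2 al v).

Definition lc (r v : R * R) : R := lred r v (xic r v).

(* G_{alpha beta} = d^2 l_c / d rdot^alpha d rdot^beta ; l_c is quadratic
   in rdot, so the Hessian is independent of rdot; we evaluate at rdot=0 *)
Definition Gmat (al be : nat) (r : R * R) : R :=
  dd al (fun v => dd be (fun v' => lc r v') v) (0, 0).

Definition detG (r : R * R) : R :=
  Gmat 0 0 r * Gmat 1 1 r - Gmat 0 1 r * Gmat 1 0 r.

Definition Ginv (al be : nat) (r : R * R) : R :=
  match al, be with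
  | O, O => Gmat 1 1 r / detG r
  | O, _ => - Gmat 0 1 r / detG r
  | _, O => - Gmat 1 0 r / detG r
  | _, _ => Gmat 0 0 r / detG r
  end.

(* velocity corresponding to momentum p~ (inverse of p~ = dl_c/drdot = G rdot) *)
Definition vel (r p : R * R) : R * R :=
  (sumk 2 (fun be => Ginv 0 be r * cmp2 be p),
   sumk 2 (fun be => Ginv 1 be r * cmp2 be p)).

Definition ham (r p : R * R) : R :=
  sumk 2 (fun al => cmp2 al p * cmp2 al (vel r p)) - lc r (vel r p).

(* (mu_a)_c = dl/dxi^a with constraints substituted, function of (r, rdot) *)
Definition muc (a : nat) (r v : R * R) : R :=
  Derive (fun t => lred r v (fun b => if Nat.eqb b a then t else xic r v b))
         (xic r v a).

Definition Bc (a al be : nat) (r : R * R) : R :=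
  dd be (A a al) r - dd al (A a be) r
  + sumk k (fun b => sumk k (fun c => C a b c * A b al r * A c be r)).

Definition Mm (a al : nat) (r : R * R) : R :=
  gm a al r - sumk k (fun b => gg a b r * A b al r).

Definition Kc (ga be al : nat) (r : R * R) : R :=
  sumk k (fun b => sumk 2 (fun eps => Mm b eps r * Ginv eps ga r * Bc b be al r)).

Definition Xr (al : nat) (r p : R * R) : R := dpP al ham r p.
Definition rdot (r p : R * R) : R * R := (Xr 0 r p, Xr 1 r p).
Definition Xp (al : nat) (r p : R * R) : R :=
  - drP al ham r p
  - sumk k (fun a => sumk 2 (fun be =>
        muc a r (rdot r p) * Bc a al be r * dpP be ham r p)).

Definition Lam (al be : nat) (r p : R * R) : R :=
  sumk k (fun a => muc a r (rdot r p) * Bc a be al r).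

Definition can_br (g h : R * R -> R * R -> R) (r p : R * R) : R :=
  sumk 2 (fun al => drP al g r p * dpP al h r p - dpP al g r p * drP al h r p).

Definition AP_br (g h : R * R -> R * R -> R) (r p : R * R) : R :=
  can_br g h r p
  + sumk 2 (fun al => sumk 2 (fun be =>
        Lam al be r p * dpP al g r p * dpP be h r p)).

(* f is a multiplier (on the coordinate domain U): with P~ = f p~ the
   bracket, expressed in (r, P~), equals f times the canonical bracket
   in (r, P~). *)
Definition is_multiplier (U : R * R -> Prop) (f : R * R -> R) : Prop :=
  C1_on U f /\ (forall r, U r -> f r <> 0) /\
  forall g h : R * R -> R * R -> R,
    phase_C1 U g -> phase_C1 U h ->
    forall r p, U r ->
      AP_br (fun r' p' => g r' (f r' * fst p', f r' * snd p'))
            (fun r' p' => h r' (f r' * fst p', f r' * snd p')) r p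
      = f r * can_br g h r (f r * fst p, f r * snd p).

Definition chaplygin_hamiltonizable (U : R * R -> Prop) : Prop :=
  exists f, is_multiplier U f.

(* N(r) is an invariant measure density: C^1, nowhere vanishing, and the
   measure N dr^1 dr^2 dp~_1 dp~_2 is preserved by the reduced flow,
   i.e. (Liouville) div(N X) = 0 *)
Definition invariant_density (U : R * R -> Prop) (N : R * R -> R) : Prop :=
  C1_on U N /\ (forall r, U r -> N r <> 0) /\
  forall r p, U r ->
    sumk 2 (fun al =>
      drP al (fun r' p' => N r' * Xr al r' p') r p
      + dpP al (fun r' p' => N r' * Xp al r' p') r p) = 0.

End Chaplygin.

(* Main.v *)
Require Import Defs.
From Stdlib Require Import Reals List Lra Lia.
From Coquelicot Require Import Coquelicot.
Open Scope R_scope.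

Lemma fold_Rplus_acc (l : list R) (x : R) :
  fold_right Rplus x l = fold_right Rplus 0 l + x.
Proof. induction l; simpl; [ring| rewrite IHl; ring]. Qed.

Lemma sumk_0 F : sumk 0 F = 0.
Proof. reflexivity. Qed.

Lemma sumk_S n F : sumk (S n) F = sumk n F + F n.
Proof.
  unfold sumk. rewrite seq_S, map_app, fold_right_app. simpl.
  rewrite fold_Rplus_acc. ring.
Qed.

Lemma sumk_2 F : sumk 2 F = F 0%nat + F 1%nat.
Proof. unfold sumk; simpl; ring. Qed.

Lemma sumk_ext n F G : (forall i, (i < n)%nat -> F i = G i) -> sumk n F = sumk n G.
Proof.
  induction n; intros H; [reflexivity|].
  rewrite !sumk_S, IHn, H; auto.
Qed.

Lemma sumk_plus n F G : sumk n (fun i => F i + G i) = sumk n F + sumk n G.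
Proof. induction n; [simpl; unfold sumk; simpl; ring|rewrite !sumk_S, IHn; ring]. Qed.

Lemma sumk_scal n c F : sumk n (fun i => c * F i) = c * sumk n F.
Proof. induction n; [unfold sumk; simpl; ring|rewrite !sumk_S, IHn; ring]. Qed.

Lemma sumk_opp n F : sumk n (fun i => - F i) = - sumk n F.
Proof. induction n; [unfold sumk; simpl; ring|rewrite !sumk_S, IHn; ring]. Qed.

Lemma sumk_zero n : sumk n (fun _ => 0) = 0.
Proof. induction n; [reflexivity|rewrite sumk_S, IHn; ring]. Qed.

Lemma sumk_swap n m F :
  sumk n (fun i => sumk m (fun j => F i j)) = sumk m (fun j => sumk n (fun i => F i j)).
Proof.
  induction n.
  - rewrite sumk_0. symmetry. apply (sumk_zero m).
  - rewrite sumk_S, IHn. rewrite <- sumk_plus. apply sumk_ext; intros. rewrite sumk_S. ring.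
Qed.

Lemma sumk_delta n a F : (a < n)%nat ->
  sumk n (fun i => if Nat.eqb i a then F i else 0) = F a.
Proof.
  induction n; intros H; [lia|].
  rewrite sumk_S. destruct (Nat.eq_dec a n).
  - subst. rewrite Nat.eqb_refl.
    rewrite (sumk_ext n _ (fun _ => 0)). rewrite sumk_zero; ring.
    intros i Hi. destruct (Nat.eqb_spec i n); [lia|reflexivity].
  - rewrite IHn by lia. destruct (Nat.eqb_spec n a); [lia|ring].
Qed.

Lemma sumk_delta' n a F : (a < n)%nat ->
  sumk n (fun i => if Nat.eqb a i then F i else 0) = F a.
Proof.
  intros H. rewrite <- (sumk_delta n a F H). apply sumk_ext; intros.
  rewrite Nat.eqb_sym; reflexivity.
Qed.

Lemma sumk_antisym n (C : nat -> nat -> R) (X : nat -> R) :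
  (forall b c, C b c = - C c b) ->
  sumk n (fun b => sumk n (fun c => C b c * X b * X c)) = 0.
Proof.
  intros HC. remember (sumk n (fun b => sumk n (fun c => C b c * X b * X c))) as S eqn:ES.
  assert (S = - S).
  { rewrite ES at 1. rewrite sumk_swap. rewrite ES.
    rewrite <- sumk_opp. apply sumk_ext; intros.
    rewrite <- sumk_opp. apply sumk_ext; intros. rewrite HC. ring. }
  lra.
Qed.

Lemma is_derive_sumk n (F : nat -> R -> R) (dF : nat -> R) x :
  (forall i, (i < n)%nat -> is_derive (F i) x (dF i)) ->
  is_derive (fun t => sumk n (fun i => F i t)) x (sumk n dF).
Proof.
  induction n; intros H.
  - unfold sumk; simpl. apply (is_derive_const 0).
  - rewrite sumk_S.
    apply (is_derive_ext (fun t => sumk n (fun i => F i t) + F n t)).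
    { intros; rewrite sumk_S; reflexivity. }
    apply (is_derive_plus (fun t => sumk n (fun i => F i t)) (F n)); auto.
Qed.

Ltac rr := match goal with |- ?a = ?b => change (a = b :> R) end; ring.
Ltac rf := match goal with |- ?a = ?b => change (a = b :> R) end; field.

Section Reg.
Variable U : R * R -> Prop.
Hypothesis HU : open U.
Implicit Types F G : R * R -> R.
Implicit Types r : R * R.

Lemma open_loc r : U r -> locally r U.
Proof. intros; apply HU; auto. Qed.

Lemma open_loc2 r : U r -> locally_2d (fun u v => U (u,v)) (fst r) (snd r).
Proof.
  intros Hr. apply locally_2d_locally. destruct r as [r1 r2]. simpl.
  apply (filter_imp U); [intros [a b]; simpl; auto| apply HU; auto].
Qed.

Lemma loc_fst r : U r -> locally (fst r) (fun t => U (t, snd r)).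
Proof. intros Hr. apply (locally_2d_1d_const_y (fun u v => U (u,v))). apply open_loc2; auto. Qed.

Lemma loc_snd r : U r -> locally (snd r) (fun t => U (fst r, t)).
Proof. intros Hr. apply (locally_2d_1d_const_x (fun u v => U (u,v))). apply open_loc2; auto. Qed.

Lemma pd1_ext F G r : (forall r, U r -> F r = G r) -> U r -> pd1 F r = pd1 G r.
Proof.
  intros H Hr. unfold pd1. apply Derive_ext_loc.
  apply (filter_imp (fun t => U (t, snd r))); [intros; apply H; auto| apply loc_fst; auto].
Qed.

Lemma pd2_ext F G r : (forall r, U r -> F r = G r) -> U r -> pd2 F r = pd2 G r.
Proof.
  intros H Hr. unfold pd2. apply Derive_ext_loc.
  apply (filter_imp (fun t => U (fst r, t))); [intros; apply H; auto| apply loc_snd; auto].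
Qed.

Lemma ex1_ext F G r : (forall r, U r -> F r = G r) -> U r ->
  ex_derive (fun t => F (t, snd r)) (fst r) -> ex_derive (fun t => G (t, snd r)) (fst r).
Proof.
  intros H Hr. apply ex_derive_ext_loc.
  apply (filter_imp (fun t => U (t, snd r))); [intros; apply H; auto| apply loc_fst; auto].
Qed.

Lemma ex2_ext F G r : (forall r, U r -> F r = G r) -> U r ->
  ex_derive (fun t => F (fst r, t)) (snd r) -> ex_derive (fun t => G (fst r, t)) (snd r).
Proof.
  intros H Hr. apply ex_derive_ext_loc.
  apply (filter_imp (fun t => U (fst r, t))); [intros; apply H; auto| apply loc_snd; auto].
Qed.

Lemma cont_ext F G r : (forall r, U r -> F r = G r) -> U r -> continuous F r -> continuous G r.
Proof.
  intros H Hr. apply continuous_ext_loc.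
  apply (filter_imp U); [intros y Hy; apply H; auto| apply HU; auto].
Qed.

Lemma Ck_ext n : forall F G, (forall r, U r -> F r = G r) -> Ck U n F -> Ck U n G.
Proof.
  induction n; intros F G H HF; simpl in *.
  - intros r Hr. apply (cont_ext F); auto.
  - destruct HF as [Hd [H0 [H1 H2]]]. repeat split.
    + apply (ex1_ext F); auto. apply Hd; auto.
    + apply (ex2_ext F); auto. apply Hd; auto.
    + apply (IHn F); auto.
    + apply (IHn (pd1 F)); auto. intros; apply pd1_ext; auto.
    + apply (IHn (pd2 F)); auto. intros; apply pd2_ext; auto.
Qed.

Lemma Ck_down n F : Ck U (S n) F -> Ck U n F.
Proof. simpl; tauto. Qed.

Lemma Ck_cont n F r : Ck U n F -> U r -> continuous F r.
Proof.
  revert F; induction n; intros F HF Hr; simpl in *; auto.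
  apply IHn; tauto.
Qed.

Lemma Ck_const n : forall c, Ck U n (fun _ => c).
Proof.
  induction n; intro c; simpl.
  - intros; apply continuous_const.
  - repeat split; auto; try (apply ex_derive_const).
    + apply (Ck_ext n (fun _ => 0)); [intros; unfold pd1; symmetry; apply Derive_const| apply IHn].
    + apply (Ck_ext n (fun _ => 0)); [intros; unfold pd2; symmetry; apply Derive_const| apply IHn].
Qed.

Lemma Ck_plus n : forall F G, Ck U n F -> Ck U n G -> Ck U n (fun r => F r + G r).
Proof.
  induction n; intros F G HF HG; simpl in *.
  - intros r Hr. exact (continuous_plus F G r (HF r Hr) (HG r Hr)).
  - destruct HF as [Fd [F0 [F1 F2]]]. destruct HG as [Gd [G0 [G1 G2]]].
    repeat split.
    + apply (ex_derive_plus (fun t => F (t, snd r)) (fun t => G (t, snd r))); [apply Fd|apply Gd]; auto.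
    + apply (ex_derive_plus (fun t => F (fst r, t)) (fun t => G (fst r, t))); [apply Fd|apply Gd]; auto.
    + auto.
    + apply (Ck_ext n (fun r => pd1 F r + pd1 G r)); auto.
      intros r Hr; unfold pd1. rewrite Derive_plus; auto; [apply Fd|apply Gd]; auto.
    + apply (Ck_ext n (fun r => pd2 F r + pd2 G r)); auto.
      intros r Hr; unfold pd2. rewrite Derive_plus; auto; [apply Fd|apply Gd]; auto.
Qed.

Lemma Ck_opp n : forall F, Ck U n F -> Ck U n (fun r => - F r).
Proof.
  induction n; intros F HF; simpl in *.
  - intros r Hr. exact (continuous_opp F r (HF r Hr)).
  - destruct HF as [Fd [F0 [F1 F2]]].
    repeat split.
    + apply (ex_derive_opp (fun t => F (t, snd r))); apply Fd; auto.
    + apply (ex_derive_opp (fun t => F (fst r, t))); apply Fd; auto.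
    + auto.
    + apply (Ck_ext n (fun r => - pd1 F r)); auto.
      intros r Hr; unfold pd1. rewrite Derive_opp; auto.
    + apply (Ck_ext n (fun r => - pd2 F r)); auto.
      intros r Hr; unfold pd2. rewrite Derive_opp; auto.
Qed.

Lemma Ck_mult n : forall F G, Ck U n F -> Ck U n G -> Ck U n (fun r => F r * G r).
Proof.
  induction n; intros F G HF HG.
  - simpl in *. intros r Hr. exact (continuous_mult F G r (HF r Hr) (HG r Hr)).
  - assert (HF' := HF); assert (HG' := HG).
    simpl in HF, HG.
    destruct HF as [Fd [F0 [F1 F2]]]. destruct HG as [Gd [G0 [G1 G2]]].
    simpl. repeat split.
    + apply (ex_derive_mult (fun t => F (t, snd r)) (fun t => G (t, snd r))); [apply Fd|apply Gd]; auto.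
    + apply (ex_derive_mult (fun t => F (fst r, t)) (fun t => G (fst r, t))); [apply Fd|apply Gd]; auto.
    + auto.
    + apply (Ck_ext n (fun r => pd1 F r * G r + F r * pd1 G r)); auto.
      * intros r Hr; unfold pd1. rewrite Derive_mult; [destruct r; reflexivity| apply Fd; auto| apply Gd; auto].
      * apply Ck_plus; auto.
    + apply (Ck_ext n (fun r => pd2 F r * G r + F r * pd2 G r)); auto.
      * intros r Hr; unfold pd2. rewrite Derive_mult; [destruct r; reflexivity| apply Fd; auto| apply Gd; auto].
      * apply Ck_plus; auto.
Qed.

Lemma Ck_inv n : forall F, Ck U n F -> (forall r, U r -> F r <> 0) -> Ck U n (fun r => / F r).
Proof.
  induction n; intros F HF Hnz.
  - simpl in *. intros r Hr.
    apply (continuous_comp F Rinv). apply HF; auto.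
    apply continuity_pt_filterlim. apply continuity_pt_inv; auto. apply continuity_pt_id.
  - assert (HF' := HF). simpl in HF.
    destruct HF as [Fd [F0 [F1 F2]]].
    simpl. repeat split.
    + apply (ex_derive_inv (fun t => F (t, snd r))); [apply Fd|apply Hnz]; auto.
      destruct r; auto.
    + apply (ex_derive_inv (fun t => F (fst r, t))); [apply Fd|apply Hnz]; auto.
      destruct r; auto.
    + auto.
    + apply (Ck_ext n (fun r => - (pd1 F r * (/ F r * / F r)))); auto.
      * intros r Hr; unfold pd1. rewrite Derive_inv; [|apply Fd; auto| destruct r; apply Hnz; auto].
        simpl. destruct r; simpl. field. apply Hnz; auto.
      * apply Ck_opp, Ck_mult; auto. apply Ck_mult; auto.
    + apply (Ck_ext n (fun r => - (pd2 F r * (/ F r * / F r)))); auto.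
      * intros r Hr; unfold pd2. rewrite Derive_inv; [|apply Fd; auto| destruct r; apply Hnz; auto].
        destruct r; simpl. field. apply Hnz; auto.
      * apply Ck_opp, Ck_mult; auto. apply Ck_mult; auto.
Qed.

Lemma Ck_sumk n m : forall (F : nat -> R * R -> R),
  (forall i, (i < m)%nat -> Ck U n (F i)) -> Ck U n (fun r => sumk m (fun i => F i r)).
Proof.
  induction m; intros F H.
  - apply (Ck_ext n (fun _ => 0)); [intros; reflexivity| apply Ck_const].
  - apply (Ck_ext n (fun r => sumk m (fun i => F i r) + F m r)).
    + intros; rewrite sumk_S; reflexivity.
    + apply Ck_plus; auto.
Qed.

Lemma sm_ext F G : (forall r, U r -> F r = G r) -> smooth_on U F -> smooth_on U G.
Proof. intros H HF n. apply (Ck_ext n F); auto. Qed.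
Lemma sm_const c : smooth_on U (fun _ => c).
Proof. intros n; apply Ck_const. Qed.
Lemma sm_plus F G : smooth_on U F -> smooth_on U G -> smooth_on U (fun r => F r + G r).
Proof. intros; intro n; apply Ck_plus; auto. Qed.
Lemma sm_opp F : smooth_on U F -> smooth_on U (fun r => - F r).
Proof. intros; intro n; apply Ck_opp; auto. Qed.
Lemma sm_minus F G : smooth_on U F -> smooth_on U G -> smooth_on U (fun r => F r - G r).
Proof. intros; apply sm_plus; auto; apply sm_opp; auto. Qed.
Lemma sm_mult F G : smooth_on U F -> smooth_on U G -> smooth_on U (fun r => F r * G r).
Proof. intros; intro n; apply Ck_mult; auto. Qed.
Lemma sm_inv F : smooth_on U F -> (forall r, U r -> F r <> 0) -> smooth_on U (fun r => / F r).
Proof. intros; intro n; apply Ck_inv; auto. Qed.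
Lemma sm_div F G : smooth_on U F -> smooth_on U G -> (forall r, U r -> G r <> 0) ->
  smooth_on U (fun r => F r / G r).
Proof. intros; apply sm_mult; auto; apply sm_inv; auto. Qed.
Lemma sm_sumk m (F : nat -> R * R -> R) :
  (forall i, (i < m)%nat -> smooth_on U (F i)) -> smooth_on U (fun r => sumk m (fun i => F i r)).
Proof. intros H n; apply Ck_sumk; intros; apply H; auto. Qed.
Lemma sm_pd1 F : smooth_on U F -> smooth_on U (pd1 F).
Proof. intros H n. destruct (H (S n)) as [_ [_ [H1 _]]]; auto. Qed.
Lemma sm_pd2 F : smooth_on U F -> smooth_on U (pd2 F).
Proof. intros H n. destruct (H (S n)) as [_ [_ [_ H1]]]; auto. Qed.
Lemma sm_cont F r : smooth_on U F -> U r -> continuous F r.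
Proof. intros H Hr. apply (Ck_cont 0); auto. Qed.
Lemma sm_ex1 F r : smooth_on U F -> U r -> ex_derive (fun t => F (t, snd r)) (fst r).
Proof. intros H Hr. destruct (H 1%nat) as [Hd _]. apply Hd; auto. Qed.
Lemma sm_ex2 F r : smooth_on U F -> U r -> ex_derive (fun t => F (fst r, t)) (snd r).
Proof. intros H Hr. destruct (H 1%nat) as [Hd _]. apply Hd; auto. Qed.
Lemma sm_C1 F : smooth_on U F -> C1_on U F.
Proof. intros H; apply H. Qed.

End Reg.

Lemma cont_pair {T A B : UniformSpace} (f : T -> A) (g : T -> B) x :
  continuous f x -> continuous g x -> continuous (fun y => (f y, g y)) x.
Proof.
  intros Hf Hg. apply (continuous_comp_2 f g (fun a b => (a, b))); auto.
  apply (continuous_ext (fun z => z)); [intros [a b]; reflexivity| apply continuous_id].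
Qed.

Lemma cont_fst {A B : UniformSpace} (w : A * B) : continuous (fun z : A * B => fst z) w.
Proof. destruct w; apply continuous_fst. Qed.
Lemma cont_snd {A B : UniformSpace} (w : A * B) : continuous (fun z : A * B => snd z) w.
Proof. destruct w; apply continuous_snd. Qed.

Lemma cont_Rmult {T : UniformSpace} (f g : T -> R) x :
  continuous f x -> continuous g x -> continuous (fun y => f y * g y) x.
Proof. intros; exact (continuous_mult f g x H H0). Qed.
Lemma cont_Rplus {T : UniformSpace} (f g : T -> R) x :
  continuous f x -> continuous g x -> continuous (fun y => f y + g y) x.
Proof. intros; exact (continuous_plus f g x H H0). Qed.
Lemma cont_Ropp {T : UniformSpace} (f : T -> R) x :
  continuous f x -> continuous (fun y => - f y) x.
Proof. intros; exact (continuous_opp f x H). Qed.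
Lemma cont_Rminus {T : UniformSpace} (f g : T -> R) x :
  continuous f x -> continuous g x -> continuous (fun y => f y - g y) x.
Proof. intros; apply cont_Rplus; auto; apply cont_Ropp; auto. Qed.

Lemma diff_pt (F : R * R -> R) (r : R * R) :
  locally r (fun u => ex_derive (fun z => F (z, snd u)) (fst u)) ->
  ex_derive (fun z => F (fst r, z)) (snd r) ->
  continuous (pd1 F) r ->
  differentiable_pt_lim (fun u v => F (u, v)) (fst r) (snd r) (pd1 F r) (pd2 F r).
Proof.
  intros H1 H2 H3. apply filterdiff_differentiable_pt_lim.
  eapply filterdiff_ext_lin.
  - assert (E : forall u : R * R, (fun u0 : R * R => F (fst u0, snd u0)) u = F u)
      by (intros [a b]; reflexivity).
    apply (is_derive_filterdiff (fun u v => F (u, v)) (fst r) (snd r)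
             (fun u v => pd1 F (u, v)) (pd2 F r)).
    + destruct r as [r1 r2]. simpl.
      apply (filter_imp (fun u => ex_derive (fun z => F (z, snd u)) (fst u))); auto.
      intros [a b] Hab. simpl. apply Derive_correct. auto.
    + destruct r; apply Derive_correct; auto.
    + apply (continuous_ext (pd1 F)); [intros [a b]; reflexivity|].
      destruct r; auto.
  - intros y. simpl. destruct r; simpl. reflexivity.
Qed.

Lemma chain2 (F : R * R -> R) (q1 q2 : R -> R) t0 dq1 dq2 :
  locally (q1 t0, q2 t0) (fun u => ex_derive (fun z => F (z, snd u)) (fst u)) ->
  ex_derive (fun z => F (q1 t0, z)) (q2 t0) ->
  continuous (pd1 F) (q1 t0, q2 t0) ->
  is_derive q1 t0 dq1 -> is_derive q2 t0 dq2 ->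
  is_derive (fun t => F (q1 t, q2 t)) t0
    (pd1 F (q1 t0, q2 t0) * dq1 + pd2 F (q1 t0, q2 t0) * dq2).
Proof.
  intros H1 H2 H3 D1 D2.
  apply is_derive_Reals.
  apply (derivable_pt_lim_comp_2d (fun u v => F (u, v)) q1 q2 t0).
  - apply (diff_pt F (q1 t0, q2 t0)); auto.
  - apply is_derive_Reals; auto.
  - apply is_derive_Reals; auto.
Qed.

Section Phase.
Variable U : R * R -> Prop.
Hypothesis HU : open U.
Variable g : R * R -> R * R -> R.
Hypothesis Hg : phase_C1 U g.
Variable f : R * R -> R.
Hypothesis Hf : C1_on U f.

Definition Pf (r p : R * R) : R * R := (f r * fst p, f r * snd p).
Definition Gc (r p : R * R) : R := g r (Pf r p).

Lemma f_cont r : U r -> continuous f r.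
Proof. intros; apply (Ck_cont U 1 f); auto. Qed.
Lemma f_ex1 r : U r -> ex_derive (fun t => f (t, snd r)) (fst r).
Proof. intros. destruct Hf as [Hd _]. apply Hd; auto. Qed.
Lemma f_ex2 r : U r -> ex_derive (fun t => f (fst r, t)) (snd r).
Proof. intros. destruct Hf as [Hd _]. apply Hd; auto. Qed.

Lemma g_p_chain r P (q1 q2 : R -> R) t0 dq1 dq2 :
  U r -> P = (q1 t0, q2 t0) ->
  is_derive q1 t0 dq1 -> is_derive q2 t0 dq2 ->
  is_derive (fun t => g r (q1 t, q2 t)) t0
    (dpP 0 g r P * dq1 + dpP 1 g r P * dq2).
Proof.
  intros Hr EP D1 D2. subst P.
  apply (chain2 (fun w => g r w) q1 q2 t0 dq1 dq2); auto.
  - apply filter_forall. intros u. destruct (Hg r u Hr) as [_ H]. apply (H 0%nat); lia.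
  - destruct (Hg r (q1 t0, q2 t0) Hr) as [_ H]. apply (H 1%nat); lia.
  - destruct (Hg r (q1 t0, q2 t0) Hr) as [_ H].
    destruct (H 0%nat ltac:(lia)) as [_ [_ [_ Hc]]].
    apply (continuous_ext (fun w => uncurry2 (dpP 0 g) (r, w))); [intros; reflexivity|].
    apply (continuous_comp (fun w => (r, w)) (uncurry2 (dpP 0 g))); auto.
    apply cont_pair; [apply continuous_const| apply continuous_id].
Qed.

Lemma dpP0_comp r p : U r -> dpP 0 Gc r p = f r * dpP 0 g r (Pf r p).
Proof.
  intros Hr.
  assert (D : is_derive (fun t => g r (f r * t, f r * snd p)) (fst p)
     (dpP 0 g r (Pf r p) * f r + dpP 1 g r (Pf r p) * 0)).
  { apply (g_p_chain r (Pf r p) (fun t => f r * t) (fun _ => f r * snd p)); auto.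
    - auto_derive; auto; ring.
    - auto_derive; auto; ring. }
  replace (f r * dpP 0 g r (Pf r p)) with
    (dpP 0 g r (Pf r p) * f r + dpP 1 g r (Pf r p) * 0) by ring.
  apply is_derive_unique; exact D.
Qed.

Lemma dpP1_comp r p : U r -> dpP 1 Gc r p = f r * dpP 1 g r (Pf r p).
Proof.
  intros Hr.
  assert (D : is_derive (fun t => g r (f r * fst p, f r * t)) (snd p)
     (dpP 0 g r (Pf r p) * 0 + dpP 1 g r (Pf r p) * f r)).
  { apply (g_p_chain r (Pf r p) (fun _ => f r * fst p) (fun t => f r * t)); auto.
    - auto_derive; auto; ring.
    - auto_derive; auto; ring. }
  replace (f r * dpP 1 g r (Pf r p)) with
    (dpP 0 g r (Pf r p) * 0 + dpP 1 g r (Pf r p) * f r) by ring.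
  apply is_derive_unique; exact D.
Qed.

Lemma is_derive_mult_c (h : R -> R) x l c : is_derive h x l -> is_derive (fun t => h t * c) x (l * c).
Proof.
  intros H. replace (l * c) with (l * c + h x * 0) by ring.
  apply (is_derive_mult h (fun _ => c)); auto. exact (is_derive_const c x). intros; apply Rmult_comm.
Qed.

Lemma loc_1d_to_2d_fst (P : R -> Prop) x y : locally x P -> locally (x, y) (fun u : R * R => P (fst u)).
Proof.
  intros H. apply (locally_2d_locally (fun u v => P u)).
  destruct H as [eps H]. exists eps. intros u v Hu _. apply H. exact Hu.
Qed.

Lemma loc_1d_to_2d_snd (P : R -> Prop) x y : locally y P -> locally (x, y) (fun u : R * R => P (snd u)).
Proof.
  intros H. apply (locally_2d_locally (fun u v => P v)).
  destruct H as [eps H]. exists eps. intros u v _ Hv. apply H. exact Hv.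
Qed.

Lemma drP0_comp r p : U r ->
  drP 0 Gc r p = drP 0 g r (Pf r p)
     + pd1 f r * (fst p * dpP 0 g r (Pf r p) + snd p * dpP 1 g r (Pf r p)).
Proof.
  intros Hr. destruct r as [r1 r2].
  set (P := Pf (r1, r2) p).
  set (Psi := fun w : R * R => g (fst w, r2) (Pf (snd w, r2) p)).
  assert (Db : is_derive (fun s => Psi (r1, s)) r1
      (dpP 0 g (r1, r2) P * (pd1 f (r1, r2) * fst p) + dpP 1 g (r1, r2) P * (pd1 f (r1, r2) * snd p))).
  { unfold Psi, Pf. simpl.
    apply (g_p_chain (r1, r2) P (fun s => f (s, r2) * fst p) (fun s => f (s, r2) * snd p)); auto.
    - apply is_derive_mult_c. apply Derive_correct. apply (f_ex1 (r1, r2)); auto.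
    - apply is_derive_mult_c. apply Derive_correct. apply (f_ex1 (r1, r2)); auto. }
  assert (Dm : is_derive (fun t => Psi (t, t)) r1
     (pd1 Psi (r1, r1) * 1 + pd2 Psi (r1, r1) * 1)).
  { apply (chain2 Psi (fun t => t) (fun t => t) r1 1 1).
    - apply (filter_imp (fun u : R * R => U (fst u, r2))).
      + intros u Hu. destruct (Hg (fst u, r2) (Pf (snd u, r2) p) Hu) as [_ H].
        apply (H 0%nat); lia.
      + apply (loc_1d_to_2d_fst (fun t => U (t, r2))). apply (loc_fst U HU (r1, r2)); auto.
    - exists (dpP 0 g (r1, r2) P * (pd1 f (r1, r2) * fst p) + dpP 1 g (r1, r2) P * (pd1 f (r1, r2) * snd p)).
      exact Db.
    - apply (continuous_ext (fun w => uncurry2 (drP 0 g) ((fst w, r2), Pf (snd w, r2) p)));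
        [intros; reflexivity|].
      apply (continuous_comp (fun w : R * R => ((fst w, r2), Pf (snd w, r2) p)) (uncurry2 (drP 0 g))).
      + apply cont_pair; [apply cont_pair; [apply cont_fst| apply continuous_const]|].
        unfold Pf. apply cont_pair; apply cont_Rmult; try apply continuous_const;
        (apply (continuous_comp (fun w : R * R => (snd w, r2)) f);
         [apply cont_pair; [apply cont_snd| apply continuous_const]| apply f_cont; auto]).
      + destruct (Hg (r1, r2) P Hr) as [_ H]. apply (H 0%nat); lia.
    - exact (is_derive_id r1).
    - exact (is_derive_id r1). }
  replace (drP 0 g (r1, r2) P +
      pd1 f (r1, r2) * (fst p * dpP 0 g (r1, r2) P + snd p * dpP 1 g (r1, r2) P))
    with (pd1 Psi (r1, r1) * 1 + pd2 Psi (r1, r1) * 1).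
  - apply is_derive_unique. exact Dm.
  - replace (pd2 Psi (r1, r1)) with
      (dpP 0 g (r1, r2) P * (pd1 f (r1, r2) * fst p) + dpP 1 g (r1, r2) P * (pd1 f (r1, r2) * snd p)).
    + change (pd1 Psi (r1, r1)) with (drP 0 g (r1, r2) P). unfold P. ring.
    + symmetry. apply is_derive_unique. exact Db.
Qed.

Lemma drP1_comp r p : U r ->
  drP 1 Gc r p = drP 1 g r (Pf r p)
     + pd2 f r * (fst p * dpP 0 g r (Pf r p) + snd p * dpP 1 g r (Pf r p)).
Proof.
  intros Hr. destruct r as [r1 r2].
  set (P := Pf (r1, r2) p).
  set (Psi := fun w : R * R => g (r1, fst w) (Pf (r1, snd w) p)).
  assert (Db : is_derive (fun s => Psi (r2, s)) r2
      (dpP 0 g (r1, r2) P * (pd2 f (r1, r2) * fst p) + dpP 1 g (r1, r2) P * (pd2 f (r1, r2) * snd p))).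
  { unfold Psi, Pf. simpl.
    apply (g_p_chain (r1, r2) P (fun s => f (r1, s) * fst p) (fun s => f (r1, s) * snd p)); auto.
    - apply is_derive_mult_c. apply Derive_correct. apply (f_ex2 (r1, r2)); auto.
    - apply is_derive_mult_c. apply Derive_correct. apply (f_ex2 (r1, r2)); auto. }
  assert (Dm : is_derive (fun t => Psi (t, t)) r2
     (pd1 Psi (r2, r2) * 1 + pd2 Psi (r2, r2) * 1)).
  { apply (chain2 Psi (fun t => t) (fun t => t) r2 1 1).
    - apply (filter_imp (fun u : R * R => U (r1, fst u))).
      + intros u Hu. destruct (Hg (r1, fst u) (Pf (r1, snd u) p) Hu) as [_ H].
        apply (H 1%nat); lia.
      + apply (loc_1d_to_2d_fst (fun t => U (r1, t))). apply (loc_snd U HU (r1, r2)); auto.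
    - exists (dpP 0 g (r1, r2) P * (pd2 f (r1, r2) * fst p) + dpP 1 g (r1, r2) P * (pd2 f (r1, r2) * snd p)).
      exact Db.
    - apply (continuous_ext (fun w => uncurry2 (drP 1 g) ((r1, fst w), Pf (r1, snd w) p)));
        [intros; reflexivity|].
      apply (continuous_comp (fun w : R * R => ((r1, fst w), Pf (r1, snd w) p)) (uncurry2 (drP 1 g))).
      + apply cont_pair; [apply cont_pair; [apply continuous_const| apply cont_fst]|].
        unfold Pf. apply cont_pair; apply cont_Rmult; try apply continuous_const;
        (apply (continuous_comp (fun w : R * R => (r1, snd w)) f);
         [apply cont_pair; [apply continuous_const| apply cont_snd]| apply f_cont; auto]).
      + destruct (Hg (r1, r2) P Hr) as [_ H]. apply (H 1%nat); lia.
    - exact (is_derive_id r2).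
    - exact (is_derive_id r2). }
  replace (drP 1 g (r1, r2) P +
      pd2 f (r1, r2) * (fst p * dpP 0 g (r1, r2) P + snd p * dpP 1 g (r1, r2) P))
    with (pd1 Psi (r2, r2) * 1 + pd2 Psi (r2, r2) * 1).
  - apply is_derive_unique. exact Dm.
  - replace (pd2 Psi (r2, r2)) with
      (dpP 0 g (r1, r2) P * (pd2 f (r1, r2) * fst p) + dpP 1 g (r1, r2) P * (pd2 f (r1, r2) * snd p)).
    + change (pd1 Psi (r2, r2)) with (drP 1 g (r1, r2) P). unfold P. ring.
    + symmetry. apply is_derive_unique. exact Db.
Qed.

End Phase.

Lemma sumk_lin3 n x y z F G H :
  sumk n (fun a => x * F a + y * G a + z * H a) = x * sumk n F + y * sumk n G + z * sumk n H.
Proof. rewrite !sumk_plus, !sumk_scal. ring. Qed.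

Lemma sumk_lin2 n x y F G :
  sumk n (fun a => x * F a + y * G a) = x * sumk n F + y * sumk n G.
Proof. rewrite !sumk_plus, !sumk_scal. ring. Qed.

Section Sys.
Variable k : nat.
Variable C : nat -> nat -> nat -> R.
Variables gs gm gg : nat -> nat -> R * R -> R.
Variable V : R * R -> R.
Variable A : nat -> nat -> R * R -> R.

Definition Q0 r := / 2 * gs 0%nat 0%nat r - sumk k (fun a => gm a 0%nat r * A a 0%nat r)
  + / 2 * sumk k (fun a => sumk k (fun b => gg a b r * (A a 0%nat r * A b 0%nat r))).
Definition Q1 r := / 2 * (gs 0%nat 1%nat r + gs 1%nat 0%nat r)
  - sumk k (fun a => gm a 0%nat r * A a 1%nat r + gm a 1%nat r * A a 0%nat r)
  + / 2 * sumk k (fun a => sumk k (fun b => gg a b r * (A a 0%nat r * A b 1%nat r + A a 1%nat r * A b 0%nat r))).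
Definition Q2 r := / 2 * gs 1%nat 1%nat r - sumk k (fun a => gm a 1%nat r * A a 1%nat r)
  + / 2 * sumk k (fun a => sumk k (fun b => gg a b r * (A a 1%nat r * A b 1%nat r))).

Lemma lc_expl r v :
  lc k gs gm gg V A r v = Q0 r * (fst v * fst v) + Q1 r * (fst v * snd v) + Q2 r * (snd v * snd v) - V r.
Proof.
  destruct v as [v0 v1]. unfold lc, lred, Q0, Q1, Q2. simpl.
  rewrite !sumk_2. simpl.
  rewrite (sumk_ext k (fun a => sumk 2 (fun al => gm a al r * cmp2 al (v0, v1) * xic A r (v0, v1) a))
     (fun a => (v0 * v0) * (- (gm a 0%nat r * A a 0%nat r)) + (v0 * v1) * (- (gm a 0%nat r * A a 1%nat r + gm a 1%nat r * A a 0%nat r))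
               + (v1 * v1) * (- (gm a 1%nat r * A a 1%nat r))))
    by (intros; unfold xic; rewrite !sumk_2; simpl; ring).
  rewrite sumk_lin3.
  rewrite (sumk_ext k (fun a => sumk k (fun b => gg a b r * xic A r (v0, v1) a * xic A r (v0, v1) b))
     (fun a => (v0 * v0) * sumk k (fun b => gg a b r * (A a 0%nat r * A b 0%nat r))
            + (v0 * v1) * sumk k (fun b => gg a b r * (A a 0%nat r * A b 1%nat r + A a 1%nat r * A b 0%nat r))
            + (v1 * v1) * sumk k (fun b => gg a b r * (A a 1%nat r * A b 1%nat r)))).
  - rewrite sumk_lin3. rewrite !sumk_opp. ring.
  - intros a _. rewrite <- sumk_lin3. apply sumk_ext; intros. unfold xic; rewrite !sumk_2; simpl; ring.
Qed.

Lemma pd1_lc r v : pd1 (fun v' => lc k gs gm gg V A r v') v = 2 * Q0 r * fst v + Q1 r * snd v.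
Proof.
  unfold pd1. apply is_derive_unique.
  apply (is_derive_ext (fun t => Q0 r * (t * t) + Q1 r * (t * snd v) + Q2 r * (snd v * snd v) - V r)).
  { intros t. rewrite lc_expl. reflexivity. }
  auto_derive; auto. ring.
Qed.

Lemma pd2_lc r v : pd2 (fun v' => lc k gs gm gg V A r v') v = Q1 r * fst v + 2 * Q2 r * snd v.
Proof.
  unfold pd2. apply is_derive_unique.
  apply (is_derive_ext (fun t => Q0 r * (fst v * fst v) + Q1 r * (fst v * t) + Q2 r * (t * t) - V r)).
  { intros t. rewrite lc_expl. reflexivity. }
  auto_derive; auto. ring.
Qed.

Lemma Gmat00 r : Gmat k gs gm gg V A 0 0 r = 2 * Q0 r.
Proof.
  unfold Gmat, dd. unfold pd1 at 1. apply is_derive_unique.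
  apply (is_derive_ext (fun t => 2 * Q0 r * t + Q1 r * 0)).
  { intros t. rewrite pd1_lc. reflexivity. }
  auto_derive; auto. ring.
Qed.
Lemma Gmat01 r : Gmat k gs gm gg V A 0 1 r = Q1 r.
Proof.
  unfold Gmat, dd. unfold pd1 at 1. apply is_derive_unique.
  apply (is_derive_ext (fun t => Q1 r * t + 2 * Q2 r * 0)).
  { intros t. rewrite pd2_lc. reflexivity. }
  auto_derive; auto. ring.
Qed.
Lemma Gmat10 r : Gmat k gs gm gg V A 1 0 r = Q1 r.
Proof.
  unfold Gmat, dd. unfold pd2 at 1. apply is_derive_unique.
  apply (is_derive_ext (fun t => 2 * Q0 r * 0 + Q1 r * t)).
  { intros t. rewrite pd1_lc. reflexivity. }
  auto_derive; auto. ring.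
Qed.
Lemma Gmat11 r : Gmat k gs gm gg V A 1 1 r = 2 * Q2 r.
Proof.
  unfold Gmat, dd. unfold pd2 at 1. apply is_derive_unique.
  apply (is_derive_ext (fun t => Q1 r * 0 + 2 * Q2 r * t)).
  { intros t. rewrite pd2_lc. reflexivity. }
  auto_derive; auto. ring.
Qed.

Lemma detG_expl r : detG k gs gm gg V A r = 4 * Q0 r * Q2 r - Q1 r * Q1 r.
Proof. unfold detG. rewrite Gmat00, Gmat01, Gmat10, Gmat11. ring. Qed.

Lemma Ginv_sym r : Ginv k gs gm gg V A 0 1 r = Ginv k gs gm gg V A 1 0 r.
Proof. unfold Ginv. cbn -[Gmat detG]. rewrite Gmat01, Gmat10. reflexivity. Qed.

Definition dG r := detG k gs gm gg V A r.
Definition Gi (a b : nat) r := Ginv k gs gm gg V A a b r.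

Lemma ham_expl r p : dG r <> 0 ->
  ham k gs gm gg V A r p =
   / 2 * (Gi 0 0 r * (fst p * fst p) + 2 * Gi 0 1 r * (fst p * snd p) + Gi 1 1 r * (snd p * snd p)) + V r.
Proof.
  intros Hd. unfold dG in Hd. unfold ham, Gi. rewrite lc_expl. unfold vel. rewrite !sumk_2. cbn [cmp2 fst snd].
  unfold Ginv. cbn -[Gmat detG]. rewrite Gmat00, Gmat01, Gmat10, Gmat11. rewrite detG_expl in *.
  field. auto.
Qed.

Lemma Xr0_expl r p : dG r <> 0 ->
  Xr k gs gm gg V A 0 r p = Gi 0 0 r * fst p + Gi 0 1 r * snd p.
Proof.
  intros Hd. unfold Xr, dpP, dd, pd1. apply is_derive_unique.
  apply (is_derive_ext (fun t => / 2 * (Gi 0 0 r * (t * t) + 2 * Gi 0 1 r * (t * snd p) + Gi 1 1 r * (snd p * snd p)) + V r)).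
  { intros t. rewrite ham_expl; auto. }
  generalize (Gi 0 0 r) (Gi 0 1 r) (Gi 1 1 r) (V r); intros. auto_derive; auto. match goal with |- ?a = ?b => change (a = b :> R) end. field.
Qed.

Lemma Xr1_expl r p : dG r <> 0 ->
  Xr k gs gm gg V A 1 r p = Gi 1 0 r * fst p + Gi 1 1 r * snd p.
Proof.
  intros Hd. unfold Xr, dpP, dd, pd2. apply is_derive_unique.
  apply (is_derive_ext (fun t => / 2 * (Gi 0 0 r * (fst p * fst p) + 2 * Gi 0 1 r * (fst p * t) + Gi 1 1 r * (t * t)) + V r)).
  { intros t. rewrite ham_expl; auto. }
  unfold Gi; rewrite Ginv_sym. generalize (Ginv k gs gm gg V A 0 0 r) (Ginv k gs gm gg V A 1 0 r) (Ginv k gs gm gg V A 1 1 r) (V r); intros. auto_derive; auto. rf.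
Qed.

Lemma xi_der (a b : nat) (c : nat -> R) t0 :
  is_derive (fun t => if Nat.eqb b a then t else c b) t0 (if Nat.eqb b a then 1 else 0).
Proof. destruct (Nat.eqb b a); [exact (is_derive_id t0)| exact (is_derive_const (c b) t0)]. Qed.

Lemma sumk_delta1 n a F : (a < n)%nat ->
  sumk n (fun i => (if Nat.eqb i a then 1 else 0) * F i) = F a.
Proof.
  intros H. rewrite <- (sumk_delta n a F H). apply sumk_ext; intros.
  destruct (Nat.eqb i a); ring.
Qed.

Lemma muc_expl a r v : (a < k)%nat -> (forall a b, gg a b r = gg b a r) ->
  muc k gs gm gg V A a r v = sumk 2 (fun eps => Mm k gm gg A a eps r * cmp2 eps v).
Proof.
  intros Ha Hsym.
  set (c := xic A r v).
  set (d := fun b : nat => if Nat.eqb b a then 1 else 0).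
  assert (Hc : forall b, (if Nat.eqb b a then c a else c b) = c b).
  { intros b. destruct (Nat.eqb_spec b a); subst; reflexivity. }
  assert (D2 : is_derive (fun t => sumk k (fun a' => sumk 2 (fun al => gm a' al r * cmp2 al v *
                 (if Nat.eqb a' a then t else c a')))) (c a)
               (sumk k (fun a' => sumk 2 (fun al => gm a' al r * cmp2 al v * d a')))).
  { apply is_derive_sumk; intros a' _. apply is_derive_sumk; intros al _.
    apply (is_derive_scal (fun t => if Nat.eqb a' a then t else c a')). apply xi_der. }
  assert (D3 : is_derive (fun t => sumk k (fun a' => sumk k (fun b => gg a' b r *
                 (if Nat.eqb a' a then t else c a') * (if Nat.eqb b a then t else c b)))) (c a)
               (sumk k (fun a' => sumk k (fun b => gg a' b r * (d a' * c b + c a' * d b))))).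
  { apply is_derive_sumk; intros a' _. apply is_derive_sumk; intros b _.
    apply (is_derive_ext (fun t => gg a' b r * ((if Nat.eqb a' a then t else c a') * (if Nat.eqb b a then t else c b)))).
    { intros; rr. }
    apply (is_derive_scal (fun t => (if Nat.eqb a' a then t else c a') * (if Nat.eqb b a then t else c b))).
    eapply is_derive_ext; [intros; reflexivity|].
    replace (d a' * c b + c a' * d b) with
      (d a' * (if Nat.eqb b a then c a else c b) + (if Nat.eqb a' a then c a else c a') * d b)
      by (rewrite !Hc; reflexivity).
    apply (is_derive_mult (fun t => if Nat.eqb a' a then t else c a') (fun t => if Nat.eqb b a then t else c b));
      [apply xi_der| apply xi_der| intros; apply Rmult_comm]. }
  assert (D : is_derive (fun t => lred k gs gm gg V r v (fun b => if Nat.eqb b a then t else c b)) (c a)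
     (0 + sumk k (fun a' => sumk 2 (fun al => gm a' al r * cmp2 al v * d a'))
      + / 2 * sumk k (fun a' => sumk k (fun b => gg a' b r * (d a' * c b + c a' * d b))) - 0)).
  { set (T1 := / 2 * sumk 2 (fun al => sumk 2 (fun be => gs al be r * cmp2 al v * cmp2 be v))).
    set (T2 := fun t => sumk k (fun a' => sumk 2 (fun al => gm a' al r * cmp2 al v *
                 (if Nat.eqb a' a then t else c a')))).
    set (T3 := fun t => sumk k (fun a' => sumk k (fun b => gg a' b r *
                 (if Nat.eqb a' a then t else c a') * (if Nat.eqb b a then t else c b)))).
    apply (is_derive_ext (fun t => (T1 + T2 t + / 2 * T3 t) - V r)); [intros; reflexivity|].
    apply (is_derive_minus (fun t => T1 + T2 t + / 2 * T3 t) (fun _ => V r) (c a)); [| exact (is_derive_const (V r) (c a))].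
    apply (is_derive_plus (fun t => T1 + T2 t) (fun t => / 2 * T3 t)).
    - apply (is_derive_plus (fun _ => T1) T2); [exact (is_derive_const T1 (c a))| exact D2].
    - apply (is_derive_scal T3 (c a) (/ 2)). exact D3. }
  unfold muc. fold c. etransitivity; [apply is_derive_unique; exact D|].
  rewrite (sumk_ext k (fun a' => sumk 2 (fun al => gm a' al r * cmp2 al v * d a'))
              (fun a' => (if Nat.eqb a' a then 1 else 0) * sumk 2 (fun al => gm a' al r * cmp2 al v)))
    by (intros; rewrite !sumk_2; unfold d; ring).
  rewrite sumk_delta1 by auto.
  rewrite (sumk_ext k (fun a' => sumk k (fun b => gg a' b r * (d a' * c b + c a' * d b)))
              (fun a' => (if Nat.eqb a' a then 1 else 0) * sumk k (fun b => gg a' b r * c b)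
                         + sumk k (fun b => (if Nat.eqb b a then 1 else 0) * (gg a' b r * c a'))))
    by (intros; rewrite <- sumk_scal, <- sumk_plus; apply sumk_ext; intros; unfold d; ring).
  rewrite sumk_plus, sumk_delta1 by auto.
  rewrite (sumk_ext k (fun a' => sumk k (fun b => (if Nat.eqb b a then 1 else 0) * (gg a' b r * c a')))
             (fun a' => gg a a' r * c a'))
    by (intros; rewrite sumk_delta1 by auto; rewrite Hsym; reflexivity).
  unfold Mm, c, xic. rewrite !sumk_2. cbn [cmp2].
  rewrite (sumk_ext k (fun b => gg a b r * - sumk 2 (fun al => A b al r * cmp2 al v))
       (fun b => (- fst v) * (gg a b r * A b 0%nat r) + (- snd v) * (gg a b r * A b 1%nat r)))
    by (intros; rewrite sumk_2; cbn [cmp2]; ring).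
  rewrite sumk_lin2. field.
Qed.

Definition K1 r := Kc k C gs gm gg V A 0 0 1 r.
Definition K2 r := Kc k C gs gm gg V A 1 0 1 r.
Definition Xv (e : nat) r p := Gi e 0 r * fst p + Gi e 1 r * snd p.

Section CHyp.
Hypothesis HC : forall a b c, C a b c = - C a c b.

Lemma Bc_diag a al r : Bc k C A a al al r = 0.
Proof.
  unfold Bc. rewrite (sumk_antisym k (fun b c => C a b c) (fun b => A b al r)); auto. ring.
Qed.

Lemma Bc_anti a r : Bc k C A a 1 0 r = - Bc k C A a 0 1 r.
Proof.
  unfold Bc. rewrite sumk_swap.
  rewrite (sumk_ext k _ (fun x => - sumk k (fun y => C a x y * A x 0%nat r * A y 1%nat r))).
  - rewrite sumk_opp. ring.
  - intros x _. rewrite <- sumk_opp. apply sumk_ext; intros y _. rewrite HC. ring.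
Qed.
End CHyp.

Lemma rdot_expl r p : dG r <> 0 -> rdot k gs gm gg V A r p = (Xv 0 r p, Xv 1 r p).
Proof. intros Hd. unfold rdot, Xv. rewrite Xr0_expl, Xr1_expl; auto. Qed.

Lemma muc_rdot a r p : (a < k)%nat -> (forall a b, gg a b r = gg b a r) -> dG r <> 0 ->
  muc k gs gm gg V A a r (rdot k gs gm gg V A r p) =
   Mm k gm gg A a 0 r * Xv 0 r p + Mm k gm gg A a 1 r * Xv 1 r p.
Proof.
  intros Ha Hs Hd. rewrite muc_expl; auto. rewrite rdot_expl; auto. rewrite sumk_2. reflexivity.
Qed.

Section Lam.
Hypothesis HC : forall a b c, C a b c = - C a c b.
Variable r : R * R.
Hypothesis Hs : forall a b, gg a b r = gg b a r.
Hypothesis Hd : dG r <> 0.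

Lemma Lam_diag al p : Lam k C gs gm gg V A al al r p = 0.
Proof.
  unfold Lam. rewrite (sumk_ext k _ (fun _ => 0)); [apply sumk_zero|].
  intros; rewrite Bc_diag; auto; ring.
Qed.

Lemma Lam_anti p : Lam k C gs gm gg V A 1 0 r p = - Lam k C gs gm gg V A 0 1 r p.
Proof.
  unfold Lam. rewrite <- sumk_opp. apply sumk_ext; intros. rewrite Bc_anti; auto. ring.
Qed.

Lemma Lam01 p : Lam k C gs gm gg V A 0 1 r p = - (fst p * K1 r + snd p * K2 r).
Proof.
  unfold Lam, K1, K2, Kc.
  rewrite (sumk_ext k _ (fun a => - (fst p * sumk 2 (fun eps => Mm k gm gg A a eps r * Ginv k gs gm gg V A eps 0 r * Bc k C A a 0 1 r)
                                   + snd p * sumk 2 (fun eps => Mm k gm gg A a eps r * Ginv k gs gm gg V A eps 1 r * Bc k C A a 0 1 r)))).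
  - rewrite sumk_opp, sumk_lin2. reflexivity.
  - intros a Ha. rewrite muc_rdot; auto. rewrite Bc_anti; auto. rewrite !sumk_2. unfold Xv, Gi. ring.
Qed.
End Lam.

End Sys.

Section Mult.
Variable k : nat.
Variable C : nat -> nat -> nat -> R.
Variables gs gm gg : nat -> nat -> R * R -> R.
Variable V : R * R -> R.
Variable A : nat -> nat -> R * R -> R.
Variable U : R * R -> Prop.
Hypothesis HU : open U.
Hypothesis HC : forall a b c, C a b c = - C a c b.
Hypothesis Hs : forall r, U r -> forall a b, gg a b r = gg b a r.
Hypothesis Hd : forall r, U r -> dG k gs gm gg V A r <> 0.

Definition Pprop (f : R * R -> R) : Prop :=
  C1_on U f /\ (forall r, U r -> f r <> 0) /\
  forall r, U r -> pd2 f r = K1 k C gs gm gg V A r * f r /\ pd1 f r = - K2 k C gs gm gg V A r * f r.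

Lemma AP_identity g h f r p : phase_C1 U g -> phase_C1 U h -> C1_on U f -> U r ->
  AP_br k C gs gm gg V A (Gc g f) (Gc h f) r p - f r * can_br g h r (Pf f r p) =
  f r * (dpP 0 g r (Pf f r p) * dpP 1 h r (Pf f r p) - dpP 1 g r (Pf f r p) * dpP 0 h r (Pf f r p)) *
   (pd2 f r * fst p - pd1 f r * snd p + f r * Lam k C gs gm gg V A 0 1 r p).
Proof.
  intros Hg Hh Hf Hr.
  unfold AP_br, can_br. rewrite !sumk_2.
  rewrite (dpP0_comp U g Hg f r p Hr), (dpP1_comp U g Hg f r p Hr),
          (dpP0_comp U h Hh f r p Hr), (dpP1_comp U h Hh f r p Hr),
          (drP0_comp U HU g Hg f Hf r p Hr), (drP1_comp U HU g Hg f Hf r p Hr),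
          (drP0_comp U HU h Hh f Hf r p Hr), (drP1_comp U HU h Hh f Hf r p Hr).
  rewrite (Lam_diag k C gs gm gg V A HC r 0), (Lam_diag k C gs gm gg V A HC r 1).
  rewrite (Lam_anti k C gs gm gg V A HC r p).
  ring.
Qed.

Lemma phase_fst : phase_C1 U (fun _ P => fst P).
Proof.
  intros r p Hr. split.
  - unfold uncurry2. apply (continuous_comp (fun z : (R*R)*(R*R) => snd z) (fun z : R * R => fst z)).
    + apply cont_snd. + apply cont_fst.
  - intros al Hal. destruct al as [|[|al]]; [| |lia]; simpl; repeat split.
    + apply ex_derive_const.
    + apply (ex_derive_id (fst p)).
    + apply (continuous_ext (fun _ => 0)); [|apply continuous_const].
      intros z; unfold uncurry2, drP, dd, pd1; simpl. symmetry; apply Derive_const.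
    + apply (continuous_ext (fun _ => 1)); [|apply continuous_const].
      intros z; unfold uncurry2, dpP, dd, pd1; simpl. symmetry; apply Derive_id.
    + apply ex_derive_const.
    + apply ex_derive_const.
    + apply (continuous_ext (fun _ => 0)); [|apply continuous_const].
      intros z; unfold uncurry2, drP, dd, pd2; simpl. symmetry; apply Derive_const.
    + apply (continuous_ext (fun _ => 0)); [|apply continuous_const].
      intros z; unfold uncurry2, dpP, dd, pd2; simpl. symmetry; apply Derive_const.
Qed.

Lemma phase_snd : phase_C1 U (fun _ P => snd P).
Proof.
  intros r p Hr. split.
  - unfold uncurry2. apply (continuous_comp (fun z : (R*R)*(R*R) => snd z) (fun z : R * R => snd z)).
    + apply cont_snd. + apply cont_snd.
  - intros al Hal. destruct al as [|[|al]]; [| |lia]; simpl; repeat split.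
    + apply ex_derive_const.
    + apply ex_derive_const.
    + apply (continuous_ext (fun _ => 0)); [|apply continuous_const].
      intros z; unfold uncurry2, drP, dd, pd1; simpl. symmetry; apply Derive_const.
    + apply (continuous_ext (fun _ => 0)); [|apply continuous_const].
      intros z; unfold uncurry2, dpP, dd, pd1; simpl. symmetry; apply Derive_const.
    + apply ex_derive_const.
    + apply (ex_derive_id (snd p)).
    + apply (continuous_ext (fun _ => 0)); [|apply continuous_const].
      intros z; unfold uncurry2, drP, dd, pd2; simpl. symmetry; apply Derive_const.
    + apply (continuous_ext (fun _ => 1)); [|apply continuous_const].
      intros z; unfold uncurry2, dpP, dd, pd2; simpl. symmetry; apply Derive_id.
Qed.

Lemma mult_P f : is_multiplier k C gs gm gg V A U f -> Pprop f.
Proof.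
  intros [Hf [Hnz Hm]]. split; [auto| split; [auto|]].
  intros r Hr.
  assert (E : forall p, pd2 f r * fst p - pd1 f r * snd p
                        - f r * (fst p * K1 k C gs gm gg V A r + snd p * K2 k C gs gm gg V A r) = 0).
  { intros p.
    assert (I := AP_identity _ _ f r p phase_fst phase_snd Hf Hr).
    rewrite (Lam01 k C gs gm gg V A HC r (Hs r Hr) (Hd r Hr)) in I.
    unfold Gc, Pf in I. rewrite (Hm _ _ phase_fst phase_snd r p Hr) in I.
    unfold dpP, dd, pd1, pd2 in I. simpl in I.
    rewrite Derive_id, Derive_const in I.
    assert (Hfr := Hnz r Hr).
    apply (Rmult_eq_reg_l (f r)); [|auto].
    rewrite Rmult_0_r. rewrite !Derive_id, !Derive_const in I. rewrite Rminus_diag in I.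
    unfold pd1, pd2.
    match type of I with 0 = ?X => transitivity X; [ring| symmetry; exact I] end. }
  assert (Hfr := Hnz r Hr).
  split.
  - specialize (E (1, 0)). simpl in E. lra.
  - specialize (E (0, 1)). simpl in E. lra.
Qed.

Lemma P_mult f : Pprop f -> is_multiplier k C gs gm gg V A U f.
Proof.
  intros [Hf [Hnz HP]]. split; [auto| split; [auto|]].
  intros g h Hg Hh r p Hr.
  assert (I := AP_identity g h f r p Hg Hh Hf Hr).
  rewrite (Lam01 k C gs gm gg V A HC r (Hs r Hr) (Hd r Hr)) in I.
  destruct (HP r Hr) as [E2 E1]. rewrite E2, E1 in I.
  unfold Gc, Pf in I.
  match type of I with ?a - ?b = ?c => assert (Z : c = 0) by ring; rewrite Z in I end.
  lra.
Qed.

End Mult.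

Section Smooth.
Variable k : nat.
Variable C : nat -> nat -> nat -> R.
Variables gs gm gg : nat -> nat -> R * R -> R.
Variable V : R * R -> R.
Variable A : nat -> nat -> R * R -> R.
Variable U : R * R -> Prop.
Hypothesis HU : open U.
Hypothesis Hsm : forall i j, smooth_on U (gs i j) /\ smooth_on U (gm i j) /\
               smooth_on U (gg i j) /\ smooth_on U (A i j).
Hypothesis HV : smooth_on U V.
Hypothesis Hd : forall r, U r -> dG k gs gm gg V A r <> 0.

Ltac smt := repeat first
  [ apply (sm_plus U HU) | apply (sm_minus U HU) | apply (sm_mult U HU) | apply (sm_opp U HU)
  | apply (sm_sumk U HU); intros | apply (sm_const U HU)
  | apply (proj1 (Hsm _ _)) | apply (proj1 (proj2 (Hsm _ _))) | apply (proj1 (proj2 (proj2 (Hsm _ _))))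
  | apply (proj2 (proj2 (proj2 (Hsm _ _)))) | exact HV ].

Lemma sm_Q0 : smooth_on U (Q0 k gs gm gg A).
Proof. unfold Q0. smt. Qed.
Lemma sm_Q1 : smooth_on U (Q1 k gs gm gg A).
Proof. unfold Q1. smt. Qed.
Lemma sm_Q2 : smooth_on U (Q2 k gs gm gg A).
Proof. unfold Q2. smt. Qed.

Lemma dG_expl_nz r : U r -> 4 * Q0 k gs gm gg A r * Q2 k gs gm gg A r - Q1 k gs gm gg A r * Q1 k gs gm gg A r <> 0.
Proof. intros Hr. rewrite <- (detG_expl k gs gm gg V A r). apply Hd; auto. Qed.

Lemma sm_idG : smooth_on U (fun r => / (4 * Q0 k gs gm gg A r * Q2 k gs gm gg A r - Q1 k gs gm gg A r * Q1 k gs gm gg A r)).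
Proof.
  apply (sm_inv U HU); [|apply dG_expl_nz].
  repeat first [apply sm_Q0 | apply sm_Q1 | apply sm_Q2 | apply (sm_minus U HU) | apply (sm_mult U HU) | apply (sm_const U HU)].
Qed.

Lemma Gi_expl e f r : Gi k gs gm gg V A e f r =
  (match e, f with
   | O, O => 2 * Q2 k gs gm gg A r
   | O, _ => - Q1 k gs gm gg A r
   | _, O => - Q1 k gs gm gg A r
   | _, _ => 2 * Q0 k gs gm gg A r end) *
  / (4 * Q0 k gs gm gg A r * Q2 k gs gm gg A r - Q1 k gs gm gg A r * Q1 k gs gm gg A r).
Proof.
  unfold Gi, Ginv. rewrite <- (detG_expl k gs gm gg V A r).
  destruct e as [|e]; destruct f as [|f]; cbn -[Gmat detG].
  - rewrite Gmat11; unfold Rdiv; ring.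
  - change (Gmat k gs gm gg V A 0 (S f) r) with (Gmat k gs gm gg V A 0 1 r). rewrite Gmat01. unfold Rdiv; ring.
  - change (Gmat k gs gm gg V A (S e) 0 r) with (Gmat k gs gm gg V A 1 0 r). rewrite Gmat10. unfold Rdiv; ring.
  - rewrite Gmat00. unfold Rdiv; ring.
Qed.

Lemma sm_Gi e f : smooth_on U (Gi k gs gm gg V A e f).
Proof.
  apply (sm_ext U HU (fun r => (match e, f with
   | O, O => 2 * Q2 k gs gm gg A r
   | O, _ => - Q1 k gs gm gg A r
   | _, O => - Q1 k gs gm gg A r
   | _, _ => 2 * Q0 k gs gm gg A r end) *
  / (4 * Q0 k gs gm gg A r * Q2 k gs gm gg A r - Q1 k gs gm gg A r * Q1 k gs gm gg A r))).
  - intros; rewrite Gi_expl; reflexivity.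
  - apply (sm_mult U HU); [|apply sm_idG].
    destruct e as [|e]; destruct f as [|f].
    + apply (sm_mult U HU); [apply (sm_const U HU)| apply sm_Q2].
    + apply (sm_opp U HU); apply sm_Q1.
    + apply (sm_opp U HU); apply sm_Q1.
    + apply (sm_mult U HU); [apply (sm_const U HU)| apply sm_Q0].
Qed.

Lemma sm_Mm a al : smooth_on U (Mm k gm gg A a al).
Proof. unfold Mm. smt. Qed.

Lemma sm_dd be F : smooth_on U F -> smooth_on U (dd be F).
Proof. destruct be; [apply sm_pd1| apply sm_pd2]; auto. Qed.

Lemma sm_Bc a al be : smooth_on U (Bc k C A a al be).
Proof.
  unfold Bc. apply (sm_plus U HU); [apply (sm_minus U HU); apply sm_dd; apply (proj2 (proj2 (proj2 (Hsm _ _))))|].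
  smt.
Qed.

Lemma sm_Kc ga be al : smooth_on U (Kc k C gs gm gg V A ga be al).
Proof.
  unfold Kc. apply (sm_sumk U HU); intros b _. apply (sm_sumk U HU); intros eps _.
  apply (sm_mult U HU); [apply (sm_mult U HU)|]; [apply sm_Mm| apply (sm_Gi eps ga)| apply sm_Bc].
Qed.

Lemma sm_K1 : smooth_on U (K1 k C gs gm gg V A).
Proof. apply sm_Kc. Qed.
Lemma sm_K2 : smooth_on U (K2 k C gs gm gg V A).
Proof. apply sm_Kc. Qed.

End Smooth.

Lemma pd1_prod_lin (N a b : R * R -> R) c0 c1 r :
  ex_derive (fun t => N (t, snd r)) (fst r) -> ex_derive (fun t => a (t, snd r)) (fst r) ->
  ex_derive (fun t => b (t, snd r)) (fst r) ->
  pd1 (fun r' => N r' * (a r' * c0 + b r' * c1)) r =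
  pd1 N r * (a r * c0 + b r * c1) + N r * (pd1 a r * c0 + pd1 b r * c1).
Proof.
  intros H1 H2 H3. destruct r as [r1 r2]. unfold pd1. simpl in *.
  set (n := fun t => N (t, r2)) in *. set (a' := fun t => a (t, r2)) in *. set (b' := fun t => b (t, r2)) in *.
  change (N (r1, r2)) with (n r1). change (a (r1, r2)) with (a' r1). change (b (r1, r2)) with (b' r1).
  apply is_derive_unique. change (is_derive (fun t => n t * (a' t * c0 + b' t * c1)) r1
    (Derive n r1 * (a' r1 * c0 + b' r1 * c1) + n r1 * (Derive a' r1 * c0 + Derive b' r1 * c1))).
  auto_derive; [repeat split; auto| unfold n, a', b'; cbv beta; rr].
Qed.

Lemma pd2_prod_lin (N a b : R * R -> R) c0 c1 r :
  ex_derive (fun t => N (fst r, t)) (snd r) -> ex_derive (fun t => a (fst r, t)) (snd r) ->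
  ex_derive (fun t => b (fst r, t)) (snd r) ->
  pd2 (fun r' => N r' * (a r' * c0 + b r' * c1)) r =
  pd2 N r * (a r * c0 + b r * c1) + N r * (pd2 a r * c0 + pd2 b r * c1).
Proof.
  intros H1 H2 H3. destruct r as [r1 r2]. unfold pd2. simpl in *.
  set (n := fun t => N (r1, t)) in *. set (a' := fun t => a (r1, t)) in *. set (b' := fun t => b (r1, t)) in *.
  change (N (r1, r2)) with (n r2). change (a (r1, r2)) with (a' r2). change (b (r1, r2)) with (b' r2).
  apply is_derive_unique. change (is_derive (fun t => n t * (a' t * c0 + b' t * c1)) r2
    (Derive n r2 * (a' r2 * c0 + b' r2 * c1) + n r2 * (Derive a' r2 * c0 + Derive b' r2 * c1))).
  auto_derive; [repeat split; auto| unfold n, a', b'; cbv beta ; rr].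
Qed.

Lemma pd1_quad (a b e W : R * R -> R) c0 c1 c2 r :
  ex_derive (fun t => a (t, snd r)) (fst r) -> ex_derive (fun t => b (t, snd r)) (fst r) ->
  ex_derive (fun t => e (t, snd r)) (fst r) -> ex_derive (fun t => W (t, snd r)) (fst r) ->
  pd1 (fun r' => / 2 * (a r' * c0 + 2 * b r' * c1 + e r' * c2) + W r') r =
  / 2 * (pd1 a r * c0 + 2 * pd1 b r * c1 + pd1 e r * c2) + pd1 W r.
Proof.
  intros H1 H2 H3 H4. destruct r as [r1 r2]. unfold pd1. simpl in *.
  set (a' := fun t => a (t, r2)) in *. set (b' := fun t => b (t, r2)) in *.
  set (e' := fun t => e (t, r2)) in *. set (w := fun t => W (t, r2)) in *.
  apply is_derive_unique. change (is_derive (fun t => / 2 * (a' t * c0 + 2 * b' t * c1 + e' t * c2) + w t) r1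
    (/ 2 * (Derive a' r1 * c0 + 2 * Derive b' r1 * c1 + Derive e' r1 * c2) + Derive w r1)).
  auto_derive; [repeat split; auto| unfold a', b', e', w; cbv beta ; rr].
Qed.

Lemma pd2_quad (a b e W : R * R -> R) c0 c1 c2 r :
  ex_derive (fun t => a (fst r, t)) (snd r) -> ex_derive (fun t => b (fst r, t)) (snd r) ->
  ex_derive (fun t => e (fst r, t)) (snd r) -> ex_derive (fun t => W (fst r, t)) (snd r) ->
  pd2 (fun r' => / 2 * (a r' * c0 + 2 * b r' * c1 + e r' * c2) + W r') r =
  / 2 * (pd2 a r * c0 + 2 * pd2 b r * c1 + pd2 e r * c2) + pd2 W r.
Proof.
  intros H1 H2 H3 H4. destruct r as [r1 r2]. unfold pd2. simpl in *.
  set (a' := fun t => a (r1, t)) in *. set (b' := fun t => b (r1, t)) in *.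
  set (e' := fun t => e (r1, t)) in *. set (w := fun t => W (r1, t)) in *.
  apply is_derive_unique. change (is_derive (fun t => / 2 * (a' t * c0 + 2 * b' t * c1 + e' t * c2) + w t) r2
    (/ 2 * (Derive a' r2 * c0 + 2 * Derive b' r2 * c1 + Derive e' r2 * c2) + Derive w r2)).
  auto_derive; [repeat split; auto| unfold a', b', e', w; cbv beta ; rr].
Qed.

Lemma deriv_ps1 (n : nat) (N0 d00 d01 d11 dV g00 g01 g10 g11 p1 x : R) (m0 m1 b : nat -> R) :
 is_derive (fun t => N0 * ((- (/2 * (d00 * (t*t) + 2*d01*(t*p1) + d11*(p1*p1)) + dV))
    - sumk n (fun a => (m0 a * (g00 * t + g01 * p1) + m1 a * (g10*t + g11*p1)) * b a * (g10 * t + g11 * p1)))) x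
   (N0 * (-(d00 * x + d01 * p1) - sumk n (fun a => (m0 a * g00 + m1 a * g10) * b a * (g10 * x + g11 * p1)
       + (m0 a * (g00 * x + g01 * p1) + m1 a * (g10 * x + g11 * p1)) * b a * g10))).
Proof.
  apply (is_derive_scal (fun t => (- (/2 * (d00 * (t*t) + 2*d01*(t*p1) + d11*(p1*p1)) + dV))
    - sumk n (fun a => (m0 a * (g00 * t + g01 * p1) + m1 a * (g10*t + g11*p1)) * b a * (g10 * t + g11 * p1)))).
  apply (is_derive_minus (fun t => - (/2 * (d00 * (t*t) + 2*d01*(t*p1) + d11*(p1*p1)) + dV))
    (fun t => sumk n (fun a => (m0 a * (g00 * t + g01 * p1) + m1 a * (g10*t + g11*p1)) * b a * (g10 * t + g11 * p1)))).
  - auto_derive; auto. rf.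
  - apply is_derive_sumk. intros a _. auto_derive; auto. rr.
Qed.

Lemma deriv_ps2 (n : nat) (N0 e00 e01 e11 dV g00 g01 g10 g11 p0 x : R) (m0 m1 b : nat -> R) :
 is_derive (fun t => N0 * ((- (/2 * (e00 * (p0*p0) + 2*e01*(p0*t) + e11*(t*t)) + dV))
    - sumk n (fun a => (m0 a * (g00 * p0 + g01 * t) + m1 a * (g10*p0 + g11*t)) * (- b a) * (g00 * p0 + g01 * t)))) x
   (N0 * (-(e01 * p0 + e11 * x) - sumk n (fun a => (m0 a * g01 + m1 a * g11) * (- b a) * (g00 * p0 + g01 * x)
       + (m0 a * (g00 * p0 + g01 * x) + m1 a * (g10 * p0 + g11 * x)) * (- b a) * g01))).
Proof.
  apply (is_derive_scal (fun t => (- (/2 * (e00 * (p0*p0) + 2*e01*(p0*t) + e11*(t*t)) + dV))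
    - sumk n (fun a => (m0 a * (g00 * p0 + g01 * t) + m1 a * (g10*p0 + g11*t)) * (- b a) * (g00 * p0 + g01 * t)))).
  apply (is_derive_minus (fun t => - (/2 * (e00 * (p0*p0) + 2*e01*(p0*t) + e11*(t*t)) + dV))
    (fun t => sumk n (fun a => (m0 a * (g00 * p0 + g01 * t) + m1 a * (g10*p0 + g11*t)) * (- b a) * (g00 * p0 + g01 * t)))).
  - auto_derive; auto. rf.
  - apply is_derive_sumk. intros a _. auto_derive; auto. rr.
Qed.

Section Div.
Variable k : nat.
Variable C : nat -> nat -> nat -> R.
Variables gs gm gg : nat -> nat -> R * R -> R.
Variable V : R * R -> R.
Variable A : nat -> nat -> R * R -> R.
Variable U : R * R -> Prop.
Hypothesis HU : open U.
Hypothesis HC : forall a b c, C a b c = - C a c b.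
Hypothesis Hs : forall r, U r -> forall a b, gg a b r = gg b a r.
Hypothesis Hd : forall r, U r -> dG k gs gm gg V A r <> 0.
Hypothesis Hsm : forall i j, smooth_on U (gs i j) /\ smooth_on U (gm i j) /\
               smooth_on U (gg i j) /\ smooth_on U (A i j).
Hypothesis HV : smooth_on U V.
Variable N : R * R -> R.
Hypothesis HN : C1_on U N.

Let GI e f := Gi k gs gm gg V A e f.
Let M a e := Mm k gm gg A a e.
Let B a := Bc k C A a 0 1.
Let X e := Xv k gs gm gg V A e.

Lemma GI_ex1 e f r : U r -> ex_derive (fun t => GI e f (t, snd r)) (fst r).
Proof. intros Hr. apply (sm_ex1 U); auto. apply (sm_Gi k gs gm gg V A U HU Hsm Hd). Qed.
Lemma GI_ex2 e f r : U r -> ex_derive (fun t => GI e f (fst r, t)) (snd r).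
Proof. intros Hr. apply (sm_ex2 U); auto. apply (sm_Gi k gs gm gg V A U HU Hsm Hd). Qed.
Lemma N_ex1 r : U r -> ex_derive (fun t => N (t, snd r)) (fst r).
Proof. intros Hr. destruct HN as [H _]. apply H; auto. Qed.
Lemma N_ex2 r : U r -> ex_derive (fun t => N (fst r, t)) (snd r).
Proof. intros Hr. destruct HN as [H _]. apply H; auto. Qed.

Lemma drP_NXr0 r p : U r ->
  drP 0 (fun r' p' => N r' * Xr k gs gm gg V A 0 r' p') r p =
  pd1 N r * X 0%nat r p + N r * (pd1 (GI 0 0) r * fst p + pd1 (GI 0 1) r * snd p).
Proof.
  intros Hr. unfold drP, dd.
  rewrite (pd1_ext U HU _ (fun r' => N r' * (GI 0 0 r' * fst p + GI 0 1 r' * snd p)) r);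
    [| intros r' Hr'; rewrite Xr0_expl; [reflexivity| apply Hd; auto] | auto].
  rewrite pd1_prod_lin; [reflexivity| apply N_ex1; auto| apply GI_ex1; auto| apply GI_ex1; auto].
Qed.

Lemma drP_NXr1 r p : U r ->
  drP 1 (fun r' p' => N r' * Xr k gs gm gg V A 1 r' p') r p =
  pd2 N r * X 1%nat r p + N r * (pd2 (GI 1 0) r * fst p + pd2 (GI 1 1) r * snd p).
Proof.
  intros Hr. unfold drP, dd.
  rewrite (pd2_ext U HU _ (fun r' => N r' * (GI 1 0 r' * fst p + GI 1 1 r' * snd p)) r);
    [| intros r' Hr'; rewrite Xr1_expl; [reflexivity| apply Hd; auto] | auto].
  rewrite pd2_prod_lin; [reflexivity| apply N_ex2; auto| apply GI_ex2; auto| apply GI_ex2; auto].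
Qed.

Lemma ham_pd1 r p : U r ->
  drP 0 (ham k gs gm gg V A) r p =
  / 2 * (pd1 (GI 0 0) r * (fst p * fst p) + 2 * pd1 (GI 0 1) r * (fst p * snd p)
         + pd1 (GI 1 1) r * (snd p * snd p)) + pd1 V r.
Proof.
  intros Hr. unfold drP, dd.
  rewrite (pd1_ext U HU _ (fun r' => / 2 * (GI 0 0 r' * (fst p * fst p) + 2 * GI 0 1 r' * (fst p * snd p)
         + GI 1 1 r' * (snd p * snd p)) + V r') r);
    [| intros r' Hr'; rewrite ham_expl; [reflexivity| apply Hd; auto] | auto].
  rewrite pd1_quad; [reflexivity| apply GI_ex1; auto| apply GI_ex1; auto| apply GI_ex1; auto|].
  apply (sm_ex1 U); auto.
Qed.

Lemma ham_pd2 r p : U r ->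
  drP 1 (ham k gs gm gg V A) r p =
  / 2 * (pd2 (GI 0 0) r * (fst p * fst p) + 2 * pd2 (GI 0 1) r * (fst p * snd p)
         + pd2 (GI 1 1) r * (snd p * snd p)) + pd2 V r.
Proof.
  intros Hr. unfold drP, dd.
  rewrite (pd2_ext U HU _ (fun r' => / 2 * (GI 0 0 r' * (fst p * fst p) + 2 * GI 0 1 r' * (fst p * snd p)
         + GI 1 1 r' * (snd p * snd p)) + V r') r);
    [| intros r' Hr'; rewrite ham_expl; [reflexivity| apply Hd; auto] | auto].
  rewrite pd2_quad; [reflexivity| apply GI_ex2; auto| apply GI_ex2; auto| apply GI_ex2; auto|].
  apply (sm_ex2 U); auto.
Qed.

Lemma Xp0_expl r p : U r ->
  Xp k C gs gm gg V A 0 r p =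
  - (/ 2 * (pd1 (GI 0 0) r * (fst p * fst p) + 2 * pd1 (GI 0 1) r * (fst p * snd p)
         + pd1 (GI 1 1) r * (snd p * snd p)) + pd1 V r)
  - sumk k (fun a => (M a 0%nat r * X 0%nat r p + M a 1%nat r * X 1%nat r p) * B a r * X 1%nat r p).
Proof.
  intros Hr. unfold Xp. rewrite ham_pd1; auto. f_equal.
  apply sumk_ext; intros a Ha. rewrite sumk_2.
  change (dpP 0 (ham k gs gm gg V A) r p) with (Xr k gs gm gg V A 0 r p).
  change (dpP 1 (ham k gs gm gg V A) r p) with (Xr k gs gm gg V A 1 r p).
  rewrite Xr0_expl, Xr1_expl by (apply Hd; auto).
  rewrite muc_rdot; [| auto| apply Hs; auto| apply Hd; auto].
  rewrite Bc_diag by auto. unfold M, B, X, Xv. ring.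
Qed.

Lemma Xp1_expl r p : U r ->
  Xp k C gs gm gg V A 1 r p =
  - (/ 2 * (pd2 (GI 0 0) r * (fst p * fst p) + 2 * pd2 (GI 0 1) r * (fst p * snd p)
         + pd2 (GI 1 1) r * (snd p * snd p)) + pd2 V r)
  - sumk k (fun a => (M a 0%nat r * X 0%nat r p + M a 1%nat r * X 1%nat r p) * (- B a r) * X 0%nat r p).
Proof.
  intros Hr. unfold Xp. rewrite ham_pd2; auto. f_equal.
  apply sumk_ext; intros a Ha. rewrite sumk_2.
  change (dpP 0 (ham k gs gm gg V A) r p) with (Xr k gs gm gg V A 0 r p).
  change (dpP 1 (ham k gs gm gg V A) r p) with (Xr k gs gm gg V A 1 r p).
  rewrite Xr0_expl, Xr1_expl by (apply Hd; auto).
  rewrite muc_rdot; [| auto| apply Hs; auto| apply Hd; auto].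
  rewrite Bc_diag by auto. rewrite Bc_anti by auto. unfold M, B, X, Xv. ring.
Qed.

Lemma dpP_NXp0 r p : U r ->
  dpP 0 (fun r' p' => N r' * Xp k C gs gm gg V A 0 r' p') r p =
  N r * (-(pd1 (GI 0 0) r * fst p + pd1 (GI 0 1) r * snd p)
    - sumk k (fun a => (M a 0%nat r * GI 0 0 r + M a 1%nat r * GI 1 0 r) * B a r * (GI 1 0 r * fst p + GI 1 1 r * snd p)
       + (M a 0%nat r * (GI 0 0 r * fst p + GI 0 1 r * snd p) + M a 1%nat r * (GI 1 0 r * fst p + GI 1 1 r * snd p)) * B a r * GI 1 0 r)).
Proof.
  intros Hr. unfold dpP, dd, pd1. apply is_derive_unique.
  eapply is_derive_ext; [| apply (deriv_ps1 k (N r) (pd1 (GI 0 0) r) (pd1 (GI 0 1) r) (pd1 (GI 1 1) r) (pd1 V r)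
     (GI 0 0 r) (GI 0 1 r) (GI 1 0 r) (GI 1 1 r) (snd p) (fst p) (fun a => M a 0%nat r) (fun a => M a 1%nat r) (fun a => B a r))].
  intros t. cbv beta. rewrite Xp0_expl; auto.
Qed.

Lemma dpP_NXp1 r p : U r ->
  dpP 1 (fun r' p' => N r' * Xp k C gs gm gg V A 1 r' p') r p =
  N r * (-(pd2 (GI 0 1) r * fst p + pd2 (GI 1 1) r * snd p)
    - sumk k (fun a => (M a 0%nat r * GI 0 1 r + M a 1%nat r * GI 1 1 r) * (- B a r) * (GI 0 0 r * fst p + GI 0 1 r * snd p)
       + (M a 0%nat r * (GI 0 0 r * fst p + GI 0 1 r * snd p) + M a 1%nat r * (GI 1 0 r * fst p + GI 1 1 r * snd p)) * (- B a r) * GI 0 1 r)).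
Proof.
  intros Hr. unfold dpP, dd, pd2. apply is_derive_unique.
  eapply is_derive_ext; [| apply (deriv_ps2 k (N r) (pd2 (GI 0 0) r) (pd2 (GI 0 1) r) (pd2 (GI 1 1) r) (pd2 V r)
     (GI 0 0 r) (GI 0 1 r) (GI 1 0 r) (GI 1 1 r) (fst p) (snd p) (fun a => M a 0%nat r) (fun a => M a 1%nat r) (fun a => B a r))].
  intros t. cbv beta. rewrite Xp1_expl; auto.
Qed.

Lemma GI_sym r : GI 1 0 r = GI 0 1 r.
Proof. unfold GI, Gi. symmetry. apply Ginv_sym. Qed.

Lemma pd2_GI_sym r : pd2 (GI 1 0) r = pd2 (GI 0 1) r.
Proof. unfold pd2. apply Derive_ext. intros t. apply GI_sym. Qed.

Lemma K1_expl r : K1 k C gs gm gg V A r = sumk k (fun b => (M b 0%nat r * GI 0 0 r + M b 1%nat r * GI 1 0 r) * B b r).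
Proof. unfold K1, Kc. apply sumk_ext; intros. rewrite sumk_2. unfold M, GI, B, Gi. ring. Qed.
Lemma K2_expl r : K2 k C gs gm gg V A r = sumk k (fun b => (M b 0%nat r * GI 0 1 r + M b 1%nat r * GI 1 1 r) * B b r).
Proof. unfold K2, Kc. apply sumk_ext; intros. rewrite sumk_2. unfold M, GI, B, Gi. ring. Qed.

Lemma div_expl r p : U r ->
  sumk 2 (fun al => drP al (fun r' p' => N r' * Xr k gs gm gg V A al r' p') r p
                  + dpP al (fun r' p' => N r' * Xp k C gs gm gg V A al r' p') r p)
  = (pd1 N r + N r * K2 k C gs gm gg V A r) * X 0%nat r p + (pd2 N r - N r * K1 k C gs gm gg V A r) * X 1%nat r p.
Proof.
  intros Hr. rewrite sumk_2.
  rewrite drP_NXr0, drP_NXr1, dpP_NXp0, dpP_NXp1 by auto.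
  rewrite K1_expl, K2_expl, pd2_GI_sym. unfold X, Xv. fold (GI 0 0) (GI 0 1) (GI 1 0) (GI 1 1).
  rewrite !GI_sym.
  set (S0 := sumk k _). set (S1 := sumk k (fun a => (M a 0%nat r * GI 0 1 r + M a 1%nat r * GI 1 1 r) * - B a r * _ + _)).
  assert (E : S0 + S1 = (GI 0 1 r * fst p + GI 1 1 r * snd p) * sumk k (fun b => (M b 0%nat r * GI 0 0 r + M b 1%nat r * GI 0 1 r) * B b r)
                       + (- (GI 0 0 r * fst p + GI 0 1 r * snd p)) * sumk k (fun b => (M b 0%nat r * GI 0 1 r + M b 1%nat r * GI 1 1 r) * B b r)).
  { unfold S0, S1. rewrite <- sumk_plus, <- sumk_lin2. apply sumk_ext; intros. ring. }
  match goal with |- ?L = ?R => transitivity (L + N r * (S0 + S1 - (S0 + S1))); [ring|] end.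
  rewrite E at 2. ring.
Qed.

End Div.

Section Inv.
Variable k : nat.
Variable C : nat -> nat -> nat -> R.
Variables gs gm gg : nat -> nat -> R * R -> R.
Variable V : R * R -> R.
Variable A : nat -> nat -> R * R -> R.
Variable U : R * R -> Prop.
Hypothesis HU : open U.
Hypothesis HC : forall a b c, C a b c = - C a c b.
Hypothesis Hs : forall r, U r -> forall a b, gg a b r = gg b a r.
Hypothesis Hd : forall r, U r -> dG k gs gm gg V A r <> 0.
Hypothesis Hsm : forall i j, smooth_on U (gs i j) /\ smooth_on U (gm i j) /\
               smooth_on U (gg i j) /\ smooth_on U (A i j).
Hypothesis HV : smooth_on U V.

Lemma inv_P N : invariant_density k C gs gm gg V A U N -> Pprop k C gs gm gg V A U N.
Proof.
  intros [HN [Hnz Hdiv]]. split; [auto| split; [auto|]].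
  intros r Hr.
  assert (E : forall p, (pd1 N r + N r * K2 k C gs gm gg V A r) * Xv k gs gm gg V A 0 r p
                      + (pd2 N r - N r * K1 k C gs gm gg V A r) * Xv k gs gm gg V A 1 r p = 0).
  { intros p. rewrite <- (div_expl k C gs gm gg V A U HU HC Hs Hd Hsm HV N HN r p Hr). apply Hdiv; auto. }
  assert (Hz := dG_expl_nz k gs gm gg V A U Hd r Hr).
  set (q0 := Q0 k gs gm gg A r) in *. set (q1 := Q1 k gs gm gg A r) in *. set (q2 := Q2 k gs gm gg A r) in *.
  assert (E1 := E (2 * q0, q1)). assert (E2 := E (q1, 2 * q2)).
  unfold Xv in E1, E2. rewrite !Gi_expl in E1, E2. fold q0 q1 q2 in E1, E2. cbn [fst snd] in E1, E2.
  assert (X00 : (2 * q2 * / (4 * q0 * q2 - q1 * q1) * (2 * q0) + - q1 * / (4 * q0 * q2 - q1 * q1) * q1) = 1) by (field; auto).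
  assert (X01 : (- q1 * / (4 * q0 * q2 - q1 * q1) * (2 * q0) + 2 * q0 * / (4 * q0 * q2 - q1 * q1) * q1) = 0) by (field; auto).
  assert (X10 : (2 * q2 * / (4 * q0 * q2 - q1 * q1) * q1 + - q1 * / (4 * q0 * q2 - q1 * q1) * (2 * q2)) = 0) by (field; auto).
  assert (X11 : (- q1 * / (4 * q0 * q2 - q1 * q1) * q1 + 2 * q0 * / (4 * q0 * q2 - q1 * q1) * (2 * q2)) = 1) by (field; auto).
  rewrite X00, X01 in E1. rewrite X10, X11 in E2.
  split; lra.
Qed.

Lemma P_inv N : Pprop k C gs gm gg V A U N -> invariant_density k C gs gm gg V A U N.
Proof.
  intros [HN [Hnz HP]]. split; [auto| split; [auto|]].
  intros r p Hr. rewrite (div_expl k C gs gm gg V A U HU HC Hs Hd Hsm HV N HN r p Hr).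
  destruct (HP r Hr) as [E2 E1]. rewrite E1, E2. ring.
Qed.

End Inv.

Lemma cont2d_of (F : R * R -> R) x y : continuous F (x, y) -> continuity_2d_pt (fun u v => F (u, v)) x y.
Proof.
  intros H. apply continuity_2d_pt_filterlim.
  change (continuous (fun z : R * R => F (fst z, snd z)) (x, y)).
  apply (continuous_ext F); [intros [a b]; reflexivity| exact H].
Qed.

Section Closed.
Variable U : R * R -> Prop.
Hypothesis HU : open U.
Variables K1 K2 f : R * R -> R.
Hypothesis HK1 : smooth_on U K1.
Hypothesis HK2 : smooth_on U K2.
Hypothesis Hf : C1_on U f.
Hypothesis Hnz : forall r, U r -> f r <> 0.
Hypothesis E2 : forall r, U r -> pd2 f r = K1 r * f r.
Hypothesis E1 : forall r, U r -> pd1 f r = - K2 r * f r.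

Lemma f_ex1' r : U r -> ex_derive (fun t => f (t, snd r)) (fst r).
Proof. intros; destruct Hf as [Hx _]; apply Hx; auto. Qed.
Lemma f_ex2' r : U r -> ex_derive (fun t => f (fst r, t)) (snd r).
Proof. intros; destruct Hf as [Hx _]; apply Hx; auto. Qed.

Lemma pd12 r : U r -> pd1 (pd2 f) r = pd1 K1 r * f r + K1 r * (- K2 r * f r).
Proof.
  intros Hr. rewrite (pd1_ext U HU (pd2 f) (fun w => K1 w * f w) r); auto.
  unfold pd1 at 1. destruct r as [r1 r2]. rewrite Derive_mult.
  - rewrite <- E1; auto.
  - apply (sm_ex1 U K1 (r1, r2)); auto.
  - apply (f_ex1' (r1, r2)); auto.
Qed.

Lemma pd21 r : U r -> pd2 (pd1 f) r = - (pd2 K2 r * f r + K2 r * (K1 r * f r)).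
Proof.
  intros Hr. rewrite (pd2_ext U HU (pd1 f) (fun w => - (K2 w * f w)) r); [| intros; rewrite E1; auto; ring| auto].
  unfold pd2 at 1. destruct r as [r1 r2]. rewrite Derive_opp. rewrite Derive_mult.
  - rewrite <- E2; auto.
  - apply (sm_ex2 U K2 (r1, r2)); auto.
  - apply (f_ex2' (r1, r2)); auto.
Qed.

Lemma cont12 r : U r -> continuous (pd1 (pd2 f)) r.
Proof.
  intros Hr.
  apply (cont_ext U HU (fun w => pd1 K1 w * f w + K1 w * (- K2 w * f w))); [intros; symmetry; apply pd12; auto| auto|].
  assert (C1 : continuous (pd1 K1) r) by (apply (sm_cont U); auto; apply (sm_pd1 U); auto).
  assert (C2 : continuous K1 r) by (apply (sm_cont U); auto).
  assert (C3 : continuous K2 r) by (apply (sm_cont U); auto).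
  assert (C4 : continuous f r) by (apply (Ck_cont U 1); auto).
  apply cont_Rplus; apply cont_Rmult; auto. apply cont_Rmult; auto. apply cont_Ropp; auto.
Qed.

Lemma cont21 r : U r -> continuous (pd2 (pd1 f)) r.
Proof.
  intros Hr.
  apply (cont_ext U HU (fun w => - (pd2 K2 w * f w + K2 w * (K1 w * f w)))); [intros; symmetry; apply pd21; auto| auto|].
  assert (C1 : continuous (pd2 K2) r) by (apply (sm_cont U); auto; apply (sm_pd2 U); auto).
  assert (C2 : continuous K1 r) by (apply (sm_cont U); auto).
  assert (C3 : continuous K2 r) by (apply (sm_cont U); auto).
  assert (C4 : continuous f r) by (apply (Ck_cont U 1); auto).
  apply cont_Ropp. apply cont_Rplus; apply cont_Rmult; auto. apply cont_Rmult; auto.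
Qed.

Lemma closed_of_P r : U r -> pd1 K1 r = - pd2 K2 r.
Proof.
  intros Hr.
  assert (S : pd1 (pd2 f) r = pd2 (pd1 f) r).
  { destruct r as [x y].
    assert (Hl := open_loc2 U HU (x, y) Hr). simpl in Hl.
    assert (Sw := Schwarz (fun u v => f (u, v)) x y).
    apply Sw; clear Sw.
    - apply (locally_2d_impl (fun u v => U (u, v))); [| exact Hl].
      apply locally_2d_forall. intros u v Huv.
      repeat split.
      + apply (f_ex1' (u, v)); auto.
      + apply (f_ex2' (u, v)); auto.
      + apply (ex1_ext U HU (fun w => K1 w * f w) (pd2 f) (u, v)); [intros; symmetry; apply E2; auto| auto|].
        apply (ex_derive_mult (fun t => K1 (t, v)) (fun t => f (t, v))).
        * apply (sm_ex1 U K1 (u, v)); auto.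
        * apply (f_ex1' (u, v)); auto.
      + apply (ex2_ext U HU (fun w => - (K2 w * f w)) (pd1 f) (u, v)); [intros; rewrite E1; auto; ring| auto|].
        apply (ex_derive_opp (fun t => K2 (u, t) * f (u, t))).
        apply (ex_derive_mult (fun t => K2 (u, t)) (fun t => f (u, t))).
        * apply (sm_ex2 U K2 (u, v)); auto.
        * apply (f_ex2' (u, v)); auto.
    - apply (cont2d_of (pd1 (pd2 f))). apply cont12; auto.
    - apply (cont2d_of (pd2 (pd1 f))). apply cont21; auto. }
  rewrite pd12, pd21 in S; auto.
  assert (Hfr := Hnz r Hr).
  apply (Rmult_eq_reg_r (f r)); auto. nra.
Qed.
End Closed.

Definition gam (c r : R * R) (t : R) : R * R :=
  (t * fst r + (1 - t) * fst c, t * snd r + (1 - t) * snd c).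

Lemma is_derive_lin1 (F : R * R -> R) t e w x0 :
  ex_derive (fun s => F (s, w)) (t * x0 + e) ->
  is_derive (fun u => F (t * u + e, w)) x0 (t * pd1 F (t * x0 + e, w)).
Proof.
  intros H.
  apply (is_derive_comp (fun s => F (s, w)) (fun u => t * u + e) x0 (pd1 F (t * x0 + e, w)) t).
  - apply Derive_correct. exact H.
  - auto_derive; auto; rr.
Qed.

Lemma is_derive_lin2 (F : R * R -> R) t e w x0 :
  ex_derive (fun s => F (w, s)) (t * x0 + e) ->
  is_derive (fun u => F (w, t * u + e)) x0 (t * pd2 F (w, t * x0 + e)).
Proof.
  intros H.
  apply (is_derive_comp (fun s => F (w, s)) (fun u => t * u + e) x0 (pd2 F (w, t * x0 + e)) t).
  - apply Derive_correct. exact H.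
  - auto_derive; auto; rr.
Qed.

Lemma cont_R_lin (t0 a b : R) : continuous (fun t : R => a * t + b) t0.
Proof.
  apply continuity_pt_filterlim. apply derivable_continuous_pt.
  apply derivable_pt_plus; [apply derivable_pt_scal; apply derivable_pt_id| apply derivable_pt_const].
Qed.

Lemma cont_gam_t c r t0 : continuous (fun t => gam c r t) t0.
Proof.
  unfold gam. apply cont_pair.
  - apply (continuous_ext (fun t => (fst r - fst c) * t + fst c)); [intros; simpl; rr| apply cont_R_lin].
  - apply (continuous_ext (fun t => (snd r - snd c) * t + snd c)); [intros; simpl; rr| apply cont_R_lin].
Qed.

Section Poinc.
Variable U : R * R -> Prop.
Hypothesis HU : open U.
Hypothesis Hcv : convex_set U.
Variable c : R * R.
Hypothesis Hcu : U c.
Variables a b : R * R -> R.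
Hypothesis Ha : smooth_on U a.
Hypothesis Hb : smooth_on U b.
Hypothesis Hcl : forall r, U r -> pd2 a r = pd1 b r.

Lemma gam_in r t : U r -> 0 <= t <= 1 -> U (gam c r t).
Proof. intros Hr Ht. apply Hcv; auto. Qed.

Lemma gam_1 r : gam c r 1 = r.
Proof. destruct r; unfold gam; simpl; f_equal; ring. Qed.

Definition phi (r : R * R) : R :=
  RInt (fun t => a (gam c r t) * (fst r - fst c) + b (gam c r t) * (snd r - snd c)) 0 1.

Lemma loc_of_cont {T : UniformSpace} (h : T -> R * R) (w : T) :
  continuous h w -> U (h w) -> locally w (fun z => U (h z)).
Proof. intros Hh Hw. apply Hh. apply HU. exact Hw. Qed.

Lemma sm_chain (F : R * R -> R) (q1 q2 : R -> R) t0 dq1 dq2 :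
  smooth_on U F -> U (q1 t0, q2 t0) ->
  is_derive q1 t0 dq1 -> is_derive q2 t0 dq2 ->
  is_derive (fun t => F (q1 t, q2 t)) t0
    (pd1 F (q1 t0, q2 t0) * dq1 + pd2 F (q1 t0, q2 t0) * dq2).
Proof.
  intros HF Hq D1 D2. apply chain2; auto.
  - apply (filter_imp U); [intros u Hu; apply (sm_ex1 U); auto| apply HU; auto].
  - apply (sm_ex2 U F (q1 t0, q2 t0)); auto.
  - apply (sm_cont U); auto. apply (sm_pd1 U); auto.
Qed.

Lemma cpairR {T : UniformSpace} (f g : T -> R) x :
  continuous f x -> continuous g x -> continuous (fun y => (f y, g y)) x.
Proof. apply (@cont_pair T R_UniformSpace R_UniformSpace). Qed.

Lemma cont_Gam1 y w0 : continuous (fun w : R * R => gam c (fst w, y) (snd w)) w0.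
Proof.
  unfold gam; cbn [fst snd]. apply cpairR; apply cont_Rplus; apply cont_Rmult;
   first [apply cont_snd | apply cont_fst | apply continuous_const | apply cont_Rminus; [apply continuous_const| apply cont_snd]].
Qed.
Lemma cont_Gam2 x w0 : continuous (fun w : R * R => gam c (x, fst w) (snd w)) w0.
Proof.
  unfold gam; cbn [fst snd]. apply cpairR; apply cont_Rplus; apply cont_Rmult;
   first [apply cont_snd | apply cont_fst | apply continuous_const | apply cont_Rminus; [apply continuous_const| apply cont_snd]].
Qed.

Lemma cont_comp_sm (F : R * R -> R) {T : UniformSpace} (h : T -> R * R) w0 :
  smooth_on U F -> U (h w0) -> continuous h w0 -> continuous (fun w => F (h w)) w0.
Proof. intros HF Hw Hh. apply (continuous_comp h F); auto. apply (sm_cont U); auto. Qed.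

Definition D1 (y u t : R) : R :=
  t * pd1 a (gam c (u, y) t) * (u - fst c) + a (gam c (u, y) t) * 1
  + t * pd1 b (gam c (u, y) t) * (y - snd c).

Lemma Fx_der y u t : U (gam c (u, y) t) ->
  is_derive (fun z => a (gam c (z, y) t) * (z - fst c) + b (gam c (z, y) t) * (y - snd c)) u (D1 y u t).
Proof.
  intros Hg. unfold D1.
  apply (is_derive_plus (fun z => a (gam c (z, y) t) * (z - fst c)) (fun z => b (gam c (z, y) t) * (y - snd c))).
  - apply (is_derive_mult (fun z => a (gam c (z, y) t)) (fun z => z - fst c)).
    + apply (is_derive_lin1 a t ((1 - t) * fst c) (t * y + (1 - t) * snd c) u).
      apply (sm_ex1 U a (gam c (u, y) t)); auto.
    + auto_derive; auto; rr.
    + intros; apply Rmult_comm.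
  - apply is_derive_mult_c.
    apply (is_derive_lin1 b t ((1 - t) * fst c) (t * y + (1 - t) * snd c) u).
    apply (sm_ex1 U b (gam c (u, y) t)); auto.
Qed.

Lemma D1_cont y x t : U (gam c (x, y) t) -> continuity_2d_pt (D1 y) x t.
Proof.
  intros Hg. apply (cont2d_of (fun w => D1 y (fst w) (snd w))). unfold D1.
  assert (G : U ((fun w : R * R => gam c (fst w, y) (snd w)) (x, t))) by exact Hg.
  assert (CG := cont_Gam1 y (x, t)).
  repeat first [ apply cont_Rplus | apply cont_Rmult | apply cont_Rminus | apply cont_fst | apply cont_snd
               | apply continuous_const ].
  all: apply (cont_comp_sm _ (fun w : R * R => gam c (fst w, y) (snd w))); auto; apply (sm_pd1 U); auto.
Qed.

Lemma phi_d1 x y : U (x, y) -> is_derive (fun u => phi (u, y)) x (a (x, y)).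
Proof.
  intros Hr.
  assert (Hloc : locally x (fun u => U (u, y))) by exact (loc_fst U HU (x, y) Hr).
  assert (P := is_derive_RInt_param
     (fun u t => a (gam c (u, y) t) * (u - fst c) + b (gam c (u, y) t) * (y - snd c)) 0 1 x).
  rewrite Rmin_left, Rmax_right in P by lra.
  assert (D : is_derive (fun u => phi (u, y)) x
      (RInt (fun t => Derive (fun u => a (gam c (u, y) t) * (u - fst c) + b (gam c (u, y) t) * (y - snd c)) x) 0 1)).
  { apply P.
    - apply (filter_imp (fun u => U (u, y))); auto.
      intros u Hu t Ht. eexists. apply Fx_der. apply gam_in; auto.
    - intros t Ht.
      apply (continuity_2d_pt_ext_loc (D1 y)).
      + apply locally_2d_locally.
        apply (filter_imp (fun w : R * R => U (gam c (fst w, y) (snd w)))).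
        * intros [u v] Huv. simpl. symmetry. apply is_derive_unique. apply Fx_der. auto.
        * apply (loc_of_cont (fun w : R * R => gam c (fst w, y) (snd w)) (x, t)); [apply cont_Gam1|].
          apply gam_in; auto.
      + apply D1_cont. apply gam_in; auto.
    - apply (filter_imp (fun u => U (u, y))); auto.
      intros u Hu. apply (ex_RInt_continuous (V := R_CompleteNormedModule)). rewrite Rmin_left, Rmax_right by lra.
      intros z Hz. assert (Hgz : U (gam c (u, y) z)) by (apply gam_in; auto).
      apply cont_Rplus; apply cont_Rmult; try apply continuous_const;
        (apply (cont_comp_sm _ (fun t => gam c (u, y) t)); auto; apply cont_gam_t). }
  replace (a (x, y)) with
    (RInt (fun t => Derive (fun u => a (gam c (u, y) t) * (u - fst c) + b (gam c (u, y) t) * (y - snd c)) x) 0 1);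
    [exact D|].
  set (h := fun t => t * a (gam c (x, y) t)).
  set (dh := fun t => 1 * a (gam c (x, y) t) + t * (pd1 a (gam c (x, y) t) * (x - fst c) + pd2 a (gam c (x, y) t) * (y - snd c))).
  rewrite (RInt_ext _ dh).
  - assert (I : is_RInt dh 0 1 (minus (h 1) (h 0))).
    { apply (is_RInt_derive (V := R_CompleteNormedModule) h dh).
      - rewrite Rmin_left, Rmax_right by lra. intros t Ht. unfold h, dh.
        assert (Hg : U (gam c (x, y) t)) by (apply gam_in; auto).
        apply (is_derive_mult (fun t => t) (fun t => a (gam c (x, y) t))).
        + exact (is_derive_id t).
        + unfold gam at 1. cbn [fst snd].
          assert (E := sm_chain a (fun t => t * x + (1 - t) * fst c) (fun t => t * y + (1 - t) * snd c) t
                         (x - fst c) (y - snd c) Ha Hg).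
          apply E; auto_derive; auto; rr.
        + intros; apply Rmult_comm.
      - rewrite Rmin_left, Rmax_right by lra. intros t Ht. unfold dh.
        assert (Hg : U (gam c (x, y) t)) by (apply gam_in; auto).
        apply cont_Rplus; [apply cont_Rmult; [apply continuous_const|]| apply cont_Rmult; [apply continuous_id|]].
        + apply (cont_comp_sm a (fun t => gam c (x, y) t)); auto. apply cont_gam_t.
        + apply cont_Rplus; apply cont_Rmult; try apply continuous_const.
          * apply (cont_comp_sm _ (fun t => gam c (x, y) t)); auto; [apply (sm_pd1 U); auto| apply cont_gam_t].
          * apply (cont_comp_sm _ (fun t => gam c (x, y) t)); auto; [apply (sm_pd2 U); auto| apply cont_gam_t]. }
    rewrite (is_RInt_unique _ _ _ _ I). unfold h. rewrite gam_1. unfold minus, plus, opp; simpl. ring.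
  - rewrite Rmin_left, Rmax_right by lra. intros t Ht.
    assert (Hg : U (gam c (x, y) t)) by (apply gam_in; auto; lra).
    transitivity (D1 y x t); [apply is_derive_unique; apply Fx_der; auto|].
    unfold D1, dh. rewrite (Hcl _ Hg). rr.
Qed.

Definition D2 (x u t : R) : R :=
  t * pd2 a (gam c (x, u) t) * (x - fst c)
  + (t * pd2 b (gam c (x, u) t) * (u - snd c) + b (gam c (x, u) t) * 1).

Lemma Fy_der x u t : U (gam c (x, u) t) ->
  is_derive (fun z => a (gam c (x, z) t) * (x - fst c) + b (gam c (x, z) t) * (z - snd c)) u (D2 x u t).
Proof.
  intros Hg. unfold D2.
  apply (is_derive_plus (fun z => a (gam c (x, z) t) * (x - fst c)) (fun z => b (gam c (x, z) t) * (z - snd c))).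
  - apply is_derive_mult_c.
    apply (is_derive_lin2 a t ((1 - t) * snd c) (t * x + (1 - t) * fst c) u).
    apply (sm_ex2 U a (gam c (x, u) t)); auto.
  - apply (is_derive_mult (fun z => b (gam c (x, z) t)) (fun z => z - snd c)).
    + apply (is_derive_lin2 b t ((1 - t) * snd c) (t * x + (1 - t) * fst c) u).
      apply (sm_ex2 U b (gam c (x, u) t)); auto.
    + auto_derive; auto; rr.
    + intros; apply Rmult_comm.
Qed.

Lemma D2_cont x y t : U (gam c (x, y) t) -> continuity_2d_pt (D2 x) y t.
Proof.
  intros Hg. apply (cont2d_of (fun w => D2 x (fst w) (snd w))). unfold D2.
  assert (G : U ((fun w : R * R => gam c (x, fst w) (snd w)) (y, t))) by exact Hg.
  assert (CG := cont_Gam2 x (y, t)).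
  repeat first [ apply cont_Rplus | apply cont_Rmult | apply cont_Rminus | apply cont_fst | apply cont_snd
               | apply continuous_const ].
  all: apply (cont_comp_sm _ (fun w : R * R => gam c (x, fst w) (snd w))); auto; try (apply (sm_pd2 U); auto).
Qed.

Lemma phi_d2 x y : U (x, y) -> is_derive (fun u => phi (x, u)) y (b (x, y)).
Proof.
  intros Hr.
  assert (Hloc : locally y (fun u => U (x, u))) by exact (loc_snd U HU (x, y) Hr).
  assert (P := is_derive_RInt_param
     (fun u t => a (gam c (x, u) t) * (x - fst c) + b (gam c (x, u) t) * (u - snd c)) 0 1 y).
  rewrite Rmin_left, Rmax_right in P by lra.
  assert (D : is_derive (fun u => phi (x, u)) y
      (RInt (fun t => Derive (fun u => a (gam c (x, u) t) * (x - fst c) + b (gam c (x, u) t) * (u - snd c)) y) 0 1)).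
  { apply P.
    - apply (filter_imp (fun u => U (x, u))); auto.
      intros u Hu t Ht. eexists. apply Fy_der. apply gam_in; auto.
    - intros t Ht.
      apply (continuity_2d_pt_ext_loc (D2 x)).
      + apply locally_2d_locally.
        apply (filter_imp (fun w : R * R => U (gam c (x, fst w) (snd w)))).
        * intros [u v] Huv. simpl. symmetry. apply is_derive_unique. apply Fy_der. auto.
        * apply (loc_of_cont (fun w : R * R => gam c (x, fst w) (snd w)) (y, t)); [apply cont_Gam2|].
          apply gam_in; auto.
      + apply D2_cont. apply gam_in; auto.
    - apply (filter_imp (fun u => U (x, u))); auto.
      intros u Hu. apply (ex_RInt_continuous (V := R_CompleteNormedModule)). rewrite Rmin_left, Rmax_right by lra.
      intros z Hz. assert (Hgz : U (gam c (x, u) z)) by (apply gam_in; auto).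
      apply cont_Rplus; apply cont_Rmult; try apply continuous_const;
        (apply (cont_comp_sm _ (fun t => gam c (x, u) t)); auto; apply cont_gam_t). }
  replace (b (x, y)) with
    (RInt (fun t => Derive (fun u => a (gam c (x, u) t) * (x - fst c) + b (gam c (x, u) t) * (u - snd c)) y) 0 1);
    [exact D|].
  set (h := fun t => t * b (gam c (x, y) t)).
  set (dh := fun t => 1 * b (gam c (x, y) t) + t * (pd1 b (gam c (x, y) t) * (x - fst c) + pd2 b (gam c (x, y) t) * (y - snd c))).
  rewrite (RInt_ext _ dh).
  - assert (I : is_RInt dh 0 1 (minus (h 1) (h 0))).
    { apply (is_RInt_derive (V := R_CompleteNormedModule) h dh).
      - rewrite Rmin_left, Rmax_right by lra. intros t Ht. unfold h, dh.
        assert (Hg : U (gam c (x, y) t)) by (apply gam_in; auto).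
        apply (is_derive_mult (fun t => t) (fun t => b (gam c (x, y) t))).
        + exact (is_derive_id t).
        + unfold gam at 1. cbn [fst snd].
          assert (E := sm_chain b (fun t => t * x + (1 - t) * fst c) (fun t => t * y + (1 - t) * snd c) t
                         (x - fst c) (y - snd c) Hb Hg).
          apply E; auto_derive; auto; rr.
        + intros; apply Rmult_comm.
      - rewrite Rmin_left, Rmax_right by lra. intros t Ht. unfold dh.
        assert (Hg : U (gam c (x, y) t)) by (apply gam_in; auto).
        apply cont_Rplus; [apply cont_Rmult; [apply continuous_const|]| apply cont_Rmult; [apply continuous_id|]].
        + apply (cont_comp_sm b (fun t => gam c (x, y) t)); auto. apply cont_gam_t.
        + apply cont_Rplus; apply cont_Rmult; try apply continuous_const.
          * apply (cont_comp_sm _ (fun t => gam c (x, y) t)); auto; [apply (sm_pd1 U); auto| apply cont_gam_t].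
          * apply (cont_comp_sm _ (fun t => gam c (x, y) t)); auto; [apply (sm_pd2 U); auto| apply cont_gam_t]. }
    rewrite (is_RInt_unique _ _ _ _ I). unfold h. rewrite gam_1. unfold minus, plus, opp; simpl. ring.
  - rewrite Rmin_left, Rmax_right by lra. intros t Ht.
    assert (Hg : U (gam c (x, y) t)) by (apply gam_in; auto; lra).
    transitivity (D2 x y t); [apply is_derive_unique; apply Fy_der; auto|].
    unfold D2, dh. rewrite (Hcl _ Hg). rr.
Qed.

Lemma phi_pd1 r : U r -> pd1 phi r = a r.
Proof. intros Hr. destruct r as [x y]. unfold pd1. apply is_derive_unique. apply phi_d1; auto. Qed.
Lemma phi_pd2 r : U r -> pd2 phi r = b r.
Proof. intros Hr. destruct r as [x y]. unfold pd2. apply is_derive_unique. apply phi_d2; auto. Qed.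

Lemma phi_cont r : U r -> continuous phi r.
Proof.
  intros Hr. destruct r as [x y].
  assert (Dp : differentiable_pt_lim (fun u v => phi (u, v)) (fst (x, y)) (snd (x, y))
                 (pd1 phi (x, y)) (pd2 phi (x, y))).
  { apply diff_pt.
    - apply (filter_imp U); [| apply HU; auto].
      intros [u v] Huv. simpl. eexists. apply phi_d1; auto.
    - simpl. eexists. apply phi_d2; auto.
    - apply (cont_ext U HU a); [intros; symmetry; apply phi_pd1; auto| auto|].
      apply (sm_cont U); auto. }
  assert (C2 : continuity_2d_pt (fun u v => phi (u, v)) x y).
  { apply differentiable_continuity_pt. exists (pd1 phi (x, y)), (pd2 phi (x, y)). exact Dp. }
  apply continuity_2d_pt_filterlim in C2.
  change (continuous (fun z : R * R => phi (fst z, snd z)) (x, y)) in C2.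
  apply (continuous_ext _ phi _ (fun z => match z with (u, v) => eq_refl end)) in C2.
  exact C2.
Qed.

Lemma phi_C1 : C1_on U phi.
Proof.
  split; [| split; [| split]].
  - intros [x y] Hr. simpl. split; eexists; [apply phi_d1| apply phi_d2]; auto.
  - simpl. intros; apply phi_cont; auto.
  - simpl. intros r Hr. apply (cont_ext U HU a); [intros; symmetry; apply phi_pd1; auto| auto|].
    apply (sm_cont U); auto.
  - simpl. intros r Hr. apply (cont_ext U HU b); [intros; symmetry; apply phi_pd2; auto| auto|].
    apply (sm_cont U); auto.
Qed.

Definition expf (r : R * R) : R := exp (phi r).

Lemma expf_d1 x y : U (x, y) -> is_derive (fun t => expf (t, y)) x (a (x, y) * expf (x, y)).
Proof.
  intros Hr. unfold expf.
  set (q := fun t => phi (t, y)).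
  change (is_derive (fun t => exp (q t)) x (a (x, y) * exp (q x))).
  assert (Hq : is_derive q x (a (x, y))) by (apply phi_d1; auto).
  replace (a (x, y)) with (Derive q x) by (apply is_derive_unique; auto).
  auto_derive; [eexists; eauto| unfold q; cbv beta; rr].
Qed.

Lemma expf_d2 x y : U (x, y) -> is_derive (fun t => expf (x, t)) y (b (x, y) * expf (x, y)).
Proof.
  intros Hr. unfold expf.
  set (q := fun t => phi (x, t)).
  change (is_derive (fun t => exp (q t)) y (b (x, y) * exp (q y))).
  assert (Hq : is_derive q y (b (x, y))) by (apply phi_d2; auto).
  replace (b (x, y)) with (Derive q y) by (apply is_derive_unique; auto).
  auto_derive; [eexists; eauto| unfold q; cbv beta; rr].
Qed.

Lemma expf_pd1 r : U r -> pd1 expf r = a r * expf r.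
Proof. intros Hr. destruct r as [x y]. unfold pd1. apply is_derive_unique. apply expf_d1; auto. Qed.
Lemma expf_pd2 r : U r -> pd2 expf r = b r * expf r.
Proof. intros Hr. destruct r as [x y]. unfold pd2. apply is_derive_unique. apply expf_d2; auto. Qed.

Lemma expf_cont r : U r -> continuous expf r.
Proof. intros Hr. unfold expf. apply (continuous_comp phi exp r); [apply phi_cont; auto| apply continuous_exp]. Qed.

Lemma expf_C1 : C1_on U expf.
Proof.
  split; [| split; [| split]].
  - intros [x y] Hr. simpl. split; eexists; [apply expf_d1| apply expf_d2]; auto.
  - simpl. intros; apply expf_cont; auto.
  - simpl. intros r Hr. apply (cont_ext U HU (fun w => a w * expf w)); [intros; symmetry; apply expf_pd1; auto| auto|].
    apply cont_Rmult; [apply (sm_cont U); auto| apply expf_cont; auto].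
  - simpl. intros r Hr. apply (cont_ext U HU (fun w => b w * expf w)); [intros; symmetry; apply expf_pd2; auto| auto|].
    apply cont_Rmult; [apply (sm_cont U); auto| apply expf_cont; auto].
Qed.

Lemma expf_nz r : expf r <> 0.
Proof. unfold expf. apply Rgt_not_eq. apply exp_pos. Qed.

End Poinc.

Theorem corollary4
  (U : R * R -> Prop) (k : nat) (C : nat -> nat -> nat -> R)
  (gs gm gg : nat -> nat -> R * R -> R) (V : R * R -> R)
  (A : nat -> nat -> R * R -> R) :
  (* coordinate domain of the shape space: nonempty, open, convex *)
  (exists r0, U r0) -> open U -> convex_set U ->
  (* C^a_{bc} are structure constants of a Lie algebra ... *)
  (forall a b c, C a b c = - C a c b) ->
  (forall a b c e, (a < k)%nat -> (b < k)%nat -> (c < k)%nat -> (e < k)%nat ->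
     sumk k (fun d => C d b c * C a d e + C d c e * C a d b + C d e b * C a d c) = 0) ->
  (* ... which is nonabelian *)
  (exists a b c, (a < k)%nat /\ (b < k)%nat /\ (c < k)%nat /\ C a b c <> 0) ->
  (* smooth data, symmetric positive definite kinetic energy metric *)
  (forall i j, smooth_on U (gs i j) /\ smooth_on U (gm i j) /\
               smooth_on U (gg i j) /\ smooth_on U (A i j)) ->
  smooth_on U V ->
  (forall al be r, U r -> gs al be r = gs be al r) ->
  (forall a b r, U r -> gg a b r = gg b a r) ->
  (forall r (v : R * R) (w : nat -> R), U r ->
     (v <> (0, 0) \/ exists a, (a < k)%nat /\ w a <> 0) ->
     0 < sumk 2 (fun al => sumk 2 (fun be => gs al be r * cmp2 al v * cmp2 be v))
         + 2 * sumk k (fun a => sumk 2 (fun al => gm a al r * cmp2 al v * w a))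
         + sumk k (fun a => sumk k (fun b => gg a b r * w a * w b))) ->
  (* G_{alpha beta} invertible *)
  (forall r, U r -> detG k gs gm gg V A r <> 0) ->
  (* Hamiltonizable  <->  d K^1_{12}/dr^1 = - d K^2_{12}/dr^2 *)
  (chaplygin_hamiltonizable k C gs gm gg V A U <->
     (forall r, U r ->
        pd1 (Kc k C gs gm gg V A 0 0 1) r = - pd2 (Kc k C gs gm gg V A 1 0 1) r))
  /\
  (* Hamiltonizable  <->  existence of an invariant measure density N(r) *)
  (chaplygin_hamiltonizable k C gs gm gg V A U <->
     exists N, invariant_density k C gs gm gg V A U N)
  /\
  (* any multiplier f satisfies f = exp(int K^1_{12} dr^2), i.e.
     d_2 f = K^1_{12} f and d_1 f = - K^2_{12} f, and f is an invariant density N *)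
  (forall f, is_multiplier k C gs gm gg V A U f ->
     (forall r, U r ->
        pd2 f r = Kc k C gs gm gg V A 0 0 1 r * f r /\
        pd1 f r = - Kc k C gs gm gg V A 1 0 1 r * f r)
     /\ invariant_density k C gs gm gg V A U f).
Proof.
  intros [r0 Hr0] HU Hcv HC _ _ Hsm HV _ Hgg _ Hdet.
  assert (Hs : forall r, U r -> forall a b, gg a b r = gg b a r) by (intros; apply Hgg; auto).
  assert (Hd : forall r, U r -> dG k gs gm gg V A r <> 0) by (intros; apply Hdet; auto).
  assert (HK1 := sm_K1 k C gs gm gg V A U HU Hsm Hd).
  assert (HK2 := sm_K2 k C gs gm gg V A U HU Hsm Hd).
  assert (MP := mult_P k C gs gm gg V A U HU HC Hs Hd).
  assert (PM := P_mult k C gs gm gg V A U HU HC Hs Hd).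
  assert (IP := inv_P k C gs gm gg V A U HU HC Hs Hd Hsm HV).
  assert (PI := P_inv k C gs gm gg V A U HU HC Hs Hd Hsm HV).
  assert (PC : forall f, Pprop k C gs gm gg V A U f -> forall r, U r ->
     pd1 (Kc k C gs gm gg V A 0 0 1) r = - pd2 (Kc k C gs gm gg V A 1 0 1) r).
  { intros f [Hf [Hnz HP]] r Hr.
    apply (closed_of_P U HU (K1 k C gs gm gg V A) (K2 k C gs gm gg V A) f HK1 HK2 Hf Hnz); auto;
      intros; apply HP; auto. }
  split; [split| split; [split|]].
  - intros [f Hf]. apply (PC f). apply MP; auto.
  - intros Hcl.
    set (a := fun r => - K2 k C gs gm gg V A r).
    set (b := K1 k C gs gm gg V A).
    assert (Ha : smooth_on U a) by (apply (sm_opp U HU); auto).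
    assert (Hcl' : forall r, U r -> pd2 a r = pd1 b r).
    { intros r Hr. unfold a, b, pd2. rewrite Derive_opp. symmetry. unfold K1, K2. apply Hcl; auto. }
    exists (expf r0 a b). apply PM.
    split; [apply (expf_C1 U HU Hcv r0 Hr0 a b Ha HK1 Hcl')|].
    split; [intros; apply expf_nz|].
    intros r Hr. split.
    + rewrite (expf_pd2 U HU Hcv r0 Hr0 a b Ha HK1 Hcl' r Hr). reflexivity.
    + rewrite (expf_pd1 U HU Hcv r0 Hr0 a b Ha HK1 Hcl' r Hr). reflexivity.
  - intros [f Hf]. exists f. apply PI. apply MP; auto.
  - intros [N HN]. exists N. apply PM. apply IP; auto.
  - intros f Hf. assert (HP := MP f Hf). split.
    + intros r Hr. destruct HP as [_ [_ HP]]. apply HP; auto.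
    + apply PI; auto.
Qed.
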